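(* Assume $n=1$, $\delta_1\in[0,1/2)$ and $\delta_1'\in[1/2,1)$. Then for each $T>0$ there is $\lambda_T>0$ such that \[ \int_{C_t}\Gamma_\delta(\varphi)(x)\,dx\ \ge\ \lambda_T\,t^{-2}\int_{C_t}\big(\varphi(x)-\langle\varphi\rangle\big)^2dx \] for all $\varphi\in C_c^1(\mathbb R^{1+m})$ and all $t\in(0,T]$, where $\langle\varphi\rangle=|C_t|^{-1}\int_{C_t}\varphi$.
   Context: Let $m\ge1$, $x=(x_1,x_2)\in\mathbb R\times\mathbb R^m$, $|\cdot|$ Euclidean norms and $|\cdot|_\infty$ the $\ell_\infty$-norm. For $a\ge0$, $a^{(\alpha,\alpha')}=a^\alpha$ if $a\le1$ and $a^{\alpha'}$ if $a\ge1$. Fix $\delta_1,\delta_1'\in[0,1)$, $\delta_2,\delta_2'\ge0$; $\Gamma_\delta(\varphi)(x)=|x_1|^{(2\delta_1,2\delta_1')}|\partial_{x_1}\varphi(x)|^2+|x_1|^{(2\delta_2,2\delta_2')}|\nabla_{x_2}\varphi(x)|^2$. Let $\alpha=(1-\delta_1)^{-1}$, $\alpha'=(1-\delta_1')^{-1}$, $\beta=(1+\delta_2-\delta_1)\alpha$, $\beta'=(1+\delta_2'-\delta_1')\alpha'$ and $C_t=\{x:|x_1|<t^{(\alpha,\alpha')},\ |x_2|_\infty<t^{(\beta,\beta')}\}$. *)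

(* Defs.v *)
From Stdlib Require Import Reals Lra Lia Classical ClassicalEpsilon.
Open Scope R_scope.

(** Points of R^{1+m} are encoded as [x : nat -> R]: coordinate 0 is x_1,
    coordinates 1..m are x_2; coordinates > m are irrelevant (functions on
    R^{1+m} are required not to depend on them). *)

Definition upd (x : nat -> R) (i : nat) (s : R) : nat -> R :=
  fun j => if Nat.eq_dec j i then s else x j.

(** total Riemann integral on [a,b] (0 if not Riemann integrable) *)
Definition Rint (f : R -> R) (a b : R) : R :=
  match excluded_middle_informative (inhabited (Riemann_integrable f a b)) with
  | left H => RiemannInt (epsilon H (fun _ => True))
  | right _ => 0
  end.

Fixpoint IntBox (k : nat) (lo hi : nat -> R) (f : (nat -> R) -> R)
  (x : nat -> R) : R :=
  match k with
  | O => f x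
  | S k' => IntBox k' lo hi
              (fun y => Rint (fun s => f (upd y k' s)) (lo k') (hi k')) x
  end.

(** a^p with the convention 0^0 = 1, 0^p = 0 for p <> 0 *)
Definition pw (a p : R) : R :=
  if Req_EM_T a 0 then (if Req_EM_T p 0 then 1 else 0) else Rpower a p.

Definition bpow (a p p' : R) : R := if Rle_dec a 1 then pw a p else pw a p'.

Fixpoint sum1 (k : nat) (f : nat -> R) : R :=
  match k with O => 0 | S k' => sum1 k' f + f k end.

Definition C1c (m : nat) (phi : (nat -> R) -> R) (D : nat -> (nat -> R) -> R)
  : Prop :=
  (forall x y, (forall i, (i <= m)%nat -> x i = y i) -> phi x = phi y) /\
  (forall i x, (i <= m)%nat ->
      derivable_pt_lim (fun s => phi (upd x i s)) (x i) (D i x)) /\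
  (forall x eps, 0 < eps -> exists d, 0 < d /\ forall y,
      (forall i, (i <= m)%nat -> Rabs (y i - x i) < d) ->
      Rabs (phi y - phi x) < eps) /\
  (forall j x eps, (j <= m)%nat -> 0 < eps -> exists d, 0 < d /\ forall y,
      (forall i, (i <= m)%nat -> Rabs (y i - x i) < d) ->
      Rabs (D j y - D j x) < eps) /\
  (exists R0, forall x, (exists i, (i <= m)%nat /\ R0 < Rabs (x i)) ->
      phi x = 0).

Definition Gamma (m : nat) (d1 d1' d2 d2' : R) (D : nat -> (nat -> R) -> R)
  (x : nat -> R) : R :=
  bpow (Rabs (x 0%nat)) (2 * d1) (2 * d1') * (D 0%nat x) ^ 2
  + bpow (Rabs (x 0%nat)) (2 * d2) (2 * d2') * sum1 m (fun i => (D i x) ^ 2).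

Definition alpha (d : R) : R := / (1 - d).
Definition betaexp (d1 d2 : R) : R := (1 + d2 - d1) * alpha d1.

Definition radA (d1 d1' t : R) : R := bpow t (alpha d1) (alpha d1').
Definition radB (d1 d1' d2 d2' t : R) : R :=
  bpow t (betaexp d1 d2) (betaexp d1' d2').

Definition IntC (m : nat) (d1 d1' d2 d2' t : R) (f : (nat -> R) -> R) : R :=
  IntBox (S m)
    (fun i => if Nat.eq_dec i 0 then - radA d1 d1' t else - radB d1 d1' d2 d2' t)
    (fun i => if Nat.eq_dec i 0 then radA d1 d1' t else radB d1 d1' d2 d2' t)
    f (fun _ => 0).

Definition volC (m : nat) (d1 d1' d2 d2' t : R) : R :=
  (2 * radA d1 d1' t) * (2 * radB d1 d1' d2 d2' t) ^ m.

(* Main.v *)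
Require Import Defs.
From Stdlib Require Import Reals Lra Lia Classical ClassicalEpsilon FunctionalExtensionality.
From Coquelicot Require Import Coquelicot.
Open Scope R_scope.


Lemma exR_minus f g a b : ex_RInt f a b -> ex_RInt g a b -> ex_RInt (fun x => f x - g x) a b.
Proof. intros. apply (ex_RInt_minus (V:=R_NormedModule) f g); auto. Qed.
Lemma exR_plus f g a b : ex_RInt f a b -> ex_RInt g a b -> ex_RInt (fun x => f x + g x) a b.
Proof. intros. apply (ex_RInt_plus (V:=R_NormedModule) f g); auto. Qed.
Lemma exR_scal f c a b : ex_RInt f a b -> ex_RInt (fun x => c * f x) a b.
Proof. intros. apply (ex_RInt_scal (V:=R_NormedModule) f); auto. Qed.
Lemma R_minus f g a b : ex_RInt f a b -> ex_RInt g a b -> RInt (fun x => f x - g x) a b = RInt f a b - RInt g a b.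
Proof. intros. apply (RInt_minus (V:=R_CompleteNormedModule) f g); auto. Qed.
Lemma R_plus f g a b : ex_RInt f a b -> ex_RInt g a b -> RInt (fun x => f x + g x) a b = RInt f a b + RInt g a b.
Proof. intros. apply (RInt_plus (V:=R_CompleteNormedModule) f g); auto. Qed.
Lemma R_scal f c a b : ex_RInt f a b -> RInt (fun x => c * f x) a b = c * RInt f a b.
Proof. intros. apply (RInt_scal (V:=R_CompleteNormedModule) f); auto. Qed.
Lemma R_const c a b : RInt (fun _ => c) a b = (b - a) * c.
Proof. rewrite RInt_const. reflexivity. Qed.
Lemma R_chasles f a b c : ex_RInt f a b -> ex_RInt f b c -> RInt f a b + RInt f b c = RInt f a c.
Proof. intros. apply (RInt_Chasles (V:=R_CompleteNormedModule)); auto. Qed.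
Lemma R_point f a : RInt f a a = 0.
Proof. apply (RInt_point (V:=R_CompleteNormedModule)). Qed.

Lemma Rint_RInt f a b : ex_RInt f a b -> Rint f a b = RInt f a b.
Proof.
  intros H. unfold Rint. destruct excluded_middle_informative as [i|n].
  - rewrite (RInt_Reals f a b (epsilon i (fun _ => True))). reflexivity.
  - exfalso. apply n. constructor. apply ex_RInt_Reals_0; exact H.
Qed.

Definition jc {P : Type} (near : P -> R -> P -> Prop) (H : R -> P -> R) :=
  forall s0 p0 eps, 0 < eps -> exists d, 0 < d /\ forall s p,
    Rabs (s - s0) < d -> near p0 d p -> Rabs (H s p - H s0 p0) < eps.

Definition nearOK {P : Type} (near : P -> R -> P -> Prop) :=
  (forall p r, 0 < r -> near p r p) /\
  (forall p0 r r' p, r <= r' -> near p0 r p -> near p0 r' p).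

Lemma tube {P : Type} (near : P -> R -> P -> Prop) H a b p0 eps :
  nearOK near -> jc near H -> 0 < eps ->
  exists d, 0 < d /\ forall s p, a <= s <= b -> near p0 d p ->
    Rabs (H s p - H s p0) < eps.
Proof.
  intros [Hrefl Hmono] Hj He.
  assert (Hd : forall t, {d : posreal | forall s p, Rabs (s - t) < d ->
     near p0 d p -> Rabs (H s p - H t p0) < eps/2}).
  { intros t. apply constructive_indefinite_description.
    destruct (Hj t p0 (eps/2)) as [d [Hd Hd']]; [lra|].
    exists (mkposreal d Hd). exact Hd'. }
  destruct (compactness_value_1d a b (fun t => proj1_sig (Hd t))) as [d Hd2].
  exists d. split; [apply cond_pos|].
  intros s p Hs Hp.
  apply NNPP. intros Hcon. apply (Hd2 s Hs). intros [t [Ht [Hst Hdt]]]. apply Hcon.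
  pose proof (proj2_sig (Hd t)) as HH. simpl in HH.
  assert (A1 := HH s p Hst (Hmono _ _ _ _ Hdt Hp)).
  assert (A2 := HH s p0 Hst (Hrefl _ _ (cond_pos _))).
  pose proof (Rabs_triang (H s p - H t p0) (-(H s p0 - H t p0))) as T.
  rewrite Rabs_Ropp in T.
  replace (H s p - H t p0 + - (H s p0 - H t p0)) with (H s p - H s p0) in T by ring.
  lra.
Qed.

Lemma jc_cont {P : Type} (near : P -> R -> P -> Prop) H p s0 :
  nearOK near -> jc near H -> continuity_pt (fun s => H s p) s0.
Proof.
  intros [Hrefl _] Hj. unfold continuity_pt, continue_in, limit1_in, limit_in.
  intros eps He. destruct (Hj s0 p eps He) as [d [Hd Hd']].
  exists d. split; [exact Hd|]. intros x [_ Hx]. simpl in *. unfold R_dist in *.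
  apply Hd'; [exact Hx| apply Hrefl; exact Hd].
Qed.

Lemma cont_exRInt (f : R -> R) a b :
  (forall s, continuity_pt f s) -> ex_RInt f a b.
Proof.
  intros H. apply (@ex_RInt_continuous R_CompleteNormedModule). intros z _.
  apply continuity_pt_filterlim. apply H.
Qed.

Lemma cont_exRInt' (f : R -> R) a b :
  (forall s, Rmin a b <= s <= Rmax a b -> continuity_pt f s) -> ex_RInt f a b.
Proof.
  intros H. apply (@ex_RInt_continuous R_CompleteNormedModule). intros z Hz.
  apply continuity_pt_filterlim. apply H; auto.
Qed.

Lemma param_cont {P : Type} (near : P -> R -> P -> Prop) H a b p0 eps :
  nearOK near -> jc near H -> a <= b -> 0 < eps ->
  exists d, 0 < d /\ forall p, near p0 d p ->
    Rabs (RInt (fun s => H s p) a b - RInt (fun s => H s p0) a b) < eps.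
Proof.
  intros Hn Hj Hab He.
  destruct (tube near H a b p0 (eps / (b - a + 1)) Hn Hj) as [d [Hd Hd']].
  { apply Rdiv_lt_0_compat; lra. }
  exists d. split; [exact Hd|]. intros p Hp.
  assert (E1 : ex_RInt (fun s => H s p) a b) by (apply cont_exRInt; intros; eapply jc_cont; eauto).
  assert (E2 : ex_RInt (fun s => H s p0) a b) by (apply cont_exRInt; intros; eapply jc_cont; eauto).
  rewrite <- (R_minus _ _ _ _ E1 E2).
  eapply Rle_lt_trans.
  - apply (abs_RInt_le_const _ a b (eps / (b - a + 1))); [exact Hab| |].
    + apply exR_minus; assumption.
    + intros t Ht. left. apply Hd'; assumption.
  - unfold Rdiv. rewrite <- Rmult_assoc.
    apply (Rmult_lt_reg_r (b - a + 1)); [lra|].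
    rewrite Rmult_assoc, Rinv_l by lra. nra.
Qed.

Definition nearR (u0 r u : R) : Prop := Rabs (u - u0) < r.
Definition nearM (m : nat) (y0 : nat -> R) (r : R) (y : nat -> R) : Prop :=
  forall i, (i <= m)%nat -> Rabs (y i - y0 i) < r.

Lemma nearR_ok : nearOK nearR.
Proof. split; unfold nearR; intros. - rewrite Rminus_diag, Rabs_R0; lra. - lra. Qed.

Lemma nearM_ok m : nearOK (nearM m).
Proof. split; unfold nearM; intros.
  - rewrite Rminus_diag, Rabs_R0; lra. - specialize (H0 i H1); lra. Qed.

Definition Cont (m : nat) (F : (nat -> R) -> R) : Prop :=
  forall x eps, 0 < eps -> exists d, 0 < d /\ forall y, nearM m x d y ->
    Rabs (F y - F x) < eps.

Lemma upd_eq y i s : upd y i s i = s.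
Proof. unfold upd. destruct Nat.eq_dec; congruence. Qed.
Lemma upd_neq y i j s : j <> i -> upd y i s j = y j.
Proof. unfold upd. destruct Nat.eq_dec; congruence. Qed.
Lemma upd_upd y i s r : upd (upd y i s) i r = upd y i r.
Proof. extensionality j. unfold upd. destruct Nat.eq_dec; auto. Qed.
Lemma upd_comm y i j s r : i <> j -> upd (upd y i s) j r = upd (upd y j r) i s.
Proof. intros. extensionality k. unfold upd. repeat destruct Nat.eq_dec; subst; auto. congruence. Qed.
Lemma upd_same y i : upd y i (y i) = y.
Proof. extensionality k. unfold upd. destruct Nat.eq_dec; subst; auto. Qed.

Lemma jc_upd m F k : Cont m F -> (k <= m)%nat ->
  jc (nearM m) (fun s y => F (upd y k s)).
Proof.
  intros HF Hk s0 y0 eps He. destruct (HF (upd y0 k s0) eps He) as [d [Hd Hd']].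
  exists d. split; [exact Hd|]. intros s y Hs Hy. apply Hd'.
  intros i Hi. unfold upd. destruct Nat.eq_dec; [exact Hs| apply Hy; exact Hi].
Qed.

Lemma Cont_slice m F k y : Cont m F -> (k <= m)%nat ->
  forall s, continuity_pt (fun s => F (upd y k s)) s.
Proof. intros HF Hk s. apply (jc_cont (nearM m) (fun s y => F (upd y k s)) y s (nearM_ok m) (jc_upd m F k HF Hk)). Qed.

Lemma Cont_exRInt m F k y a b : Cont m F -> (k <= m)%nat ->
  ex_RInt (fun s => F (upd y k s)) a b.
Proof. intros. apply cont_exRInt. apply (Cont_slice m); auto. Qed.

Lemma Cont_Rint m F k y a b : Cont m F -> (k <= m)%nat ->
  Rint (fun s => F (upd y k s)) a b = RInt (fun s => F (upd y k s)) a b.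
Proof. intros. apply Rint_RInt. apply (Cont_exRInt m); auto. Qed.

Lemma Cont_param_RInt m F k a b : Cont m F -> (k <= m)%nat -> a <= b ->
  Cont m (fun y => RInt (fun s => F (upd y k s)) a b).
Proof.
  intros HF Hk Hab x eps He.
  apply (param_cont (nearM m) (fun s y => F (upd y k s)) a b x eps (nearM_ok m) (jc_upd m F k HF Hk) Hab He).
Qed.

Lemma Cont_param m F k a b : Cont m F -> (k <= m)%nat -> a <= b ->
  Cont m (fun y => Rint (fun s => F (upd y k s)) a b).
Proof.
  intros HF Hk Hab. 
  assert (E : (fun y => Rint (fun s => F (upd y k s)) a b) = (fun y => RInt (fun s => F (upd y k s)) a b)).
  { extensionality y. apply (Cont_Rint m); auto. }
  rewrite E. apply Cont_param_RInt; auto.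
Qed.


Lemma R_swap f a b : ex_RInt f a b -> RInt f b a = - RInt f a b.
Proof. intros H. rewrite <- (opp_RInt_swap (V:=R_CompleteNormedModule) f a b H). reflexivity. Qed.

Lemma param_cont_gen {P : Type} (near : P -> R -> P -> Prop) H a b p0 eps :
  nearOK near -> jc near H -> 0 < eps ->
  exists d, 0 < d /\ forall p, near p0 d p ->
    Rabs (RInt (fun s => H s p) a b - RInt (fun s => H s p0) a b) < eps.
Proof.
  intros Hn Hj He. destruct (Rle_dec a b) as [Hab|Hab].
  - apply param_cont; auto.
  - destruct (param_cont near H b a p0 eps Hn Hj) as [d [Hd Hd']]; [lra|auto|].
    exists d. split; auto. intros p Hp.
    rewrite (R_swap (fun s => H s p)), (R_swap (fun s => H s p0)).
    + replace (- RInt (fun s : R => H s p) b a - - RInt (fun s : R => H s p0) b a)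
        with (- (RInt (fun s : R => H s p) b a - RInt (fun s : R => H s p0) b a)) by ring.
      rewrite Rabs_Ropp. auto.
    + apply cont_exRInt; intros; eapply jc_cont; eauto.
    + apply cont_exRInt; intros; eapply jc_cont; eauto.
Qed.

Lemma param_cont_R H a b u0 : jc nearR H ->
  continuity_pt (fun u => RInt (fun s => H s u) a b) u0.
Proof.
  intros Hj. unfold continuity_pt, continue_in, limit1_in, limit_in.
  intros eps He. destruct (param_cont_gen nearR H a b u0 eps nearR_ok Hj He) as [d [Hd Hd']].
  exists d. split; auto. intros x [_ Hx]. simpl in *. unfold R_dist in *. apply Hd'. exact Hx.
Qed.

Definition swap2 (H : R -> R -> R) := fun u s => H s u.

Lemma jc_swap H : jc nearR H -> jc nearR (swap2 H).
Proof.
  intros Hj s0 u0 eps He. destruct (Hj u0 s0 eps He) as [d [Hd Hd']].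
  exists d. split; auto. intros s u Hs Hu. unfold swap2. apply Hd'; auto.
Qed.

Lemma fubini2 H a b c d : jc nearR H ->
  RInt (fun s => RInt (fun u => H s u) c d) a b =
  RInt (fun u => RInt (fun s => H s u) a b) c d.
Proof.
  intros Hj.
  assert (Hj' := jc_swap H Hj).
  set (I1 := fun s => RInt (fun u => H s u) c d).
  assert (CI1 : forall s, continuity_pt I1 s).
  { intros s. unfold I1. apply (param_cont_R (swap2 H) c d s Hj'). }
  assert (CH1 : forall u s, continuity_pt (fun s => H s u) s).
  { intros u s. apply (jc_cont nearR H u s nearR_ok Hj). }
  assert (CH2 : forall s u, continuity_pt (fun u => H s u) u).
  { intros s u. apply (jc_cont nearR (swap2 H) s u nearR_ok Hj'). }
  set (Phi := fun x => RInt I1 a x).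
  set (Psi := fun x => RInt (fun u => RInt (fun s => H s u) a x) c d).
  assert (DPhi : forall x, is_derive Phi x (I1 x)).
  { intros x. apply (is_derive_RInt (V:=R_NormedModule) I1 Phi a x).
    - apply filter_forall. intros y. apply (RInt_correct (V:=R_CompleteNormedModule)).
      apply cont_exRInt; auto.
    - apply continuity_pt_filterlim; auto. }
  assert (Dder : forall u v, Derive (fun z => RInt (fun s => H s v) a z) u = H u v).
  { intros u v. apply (Derive_RInt (fun s => H s v) a u).
    - apply filter_forall. intros y. apply cont_exRInt. auto.
    - apply continuity_pt_filterlim; auto. }
  assert (DPsi : forall x, is_derive Psi x (I1 x)).
  { intros x.
    assert (HH := is_derive_RInt_param (fun z v => RInt (fun s => H s v) a z) c d x).
    replace (I1 x) with (RInt (fun t => Derive (fun u => RInt (fun s => H s t) a u) x) c d).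
    2:{ unfold I1. apply RInt_ext. intros. rewrite Dder. reflexivity. }
    apply HH.
    - apply filter_forall. intros y t _. eexists.
      apply (is_derive_RInt (V:=R_NormedModule) (fun s => H s t) _ a y).
      + apply filter_forall. intros z. apply (RInt_correct (V:=R_CompleteNormedModule)).
        apply cont_exRInt; auto.
      + apply continuity_pt_filterlim; auto.
    - intros t _. intros eps.
      destruct (Hj x t eps (cond_pos eps)) as [dl [Hdl Hdl']].
      exists (mkposreal dl Hdl). intros u v Hu Hv. rewrite !Dder. apply Hdl'; auto.
    - apply filter_forall. intros y. apply cont_exRInt. intros u.
      apply (param_cont_R H a y u Hj). }
  assert (Z0 : forall c d, RInt (fun _ : R => 0) c d = 0).
  { intros. rewrite R_const. apply Rmult_0_r. }
  destruct (Req_dec a b) as [Heq|Hneq].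
  - subst b. unfold Phi, Psi, I1 in *.
    transitivity 0. { apply R_point. }
    transitivity (RInt (fun _ : R => 0) c d). { symmetry. apply Z0. }
    apply RInt_ext. intros. symmetry. apply R_point.
  - assert (Key : forall x y, x < y -> Phi x - Psi x = Phi y - Psi y).
    { intros x y Hxy. apply (eq_is_derive (V:=R_NormedModule) (fun z => Phi z - Psi z) x y); auto.
      intros t _. replace (@zero R_NormedModule) with (minus (I1 t) (I1 t)).
      + apply (is_derive_minus (V:=R_NormedModule)); auto.
      + apply (minus_eq_zero (G:=R_AbelianGroup)). }
    assert (Pa : Phi a = 0) by (unfold Phi; apply R_point).
    assert (Sa : Psi a = 0).
    { unfold Psi. transitivity (RInt (fun _ : R => 0) c d). 2: apply Z0.
      apply RInt_ext. intros. apply R_point. }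
    assert (E : Phi b - Psi b = 0).
    { destruct (Rlt_dec a b) as [r|r].
      - rewrite <- (Key a b r). rewrite Pa, Sa; apply Rminus_diag.
      - rewrite (Key b a); [|lra]. rewrite Pa, Sa; apply Rminus_diag. }
    unfold Phi, Psi, I1 in E. exact (Rminus_diag_uniq _ _ E).
Qed.


Fixpoint IB (lo hi : nat -> R) (j n : nat) (F : (nat -> R) -> R) (x : nat -> R) : R :=
  match n with
  | O => F x
  | S n' => IB lo hi j n' (fun y => Rint (fun s => F (upd y (j + n')%nat s)) (lo (j + n')%nat) (hi (j + n')%nat)) x
  end.

Lemma IntBox_IB k lo hi f x : IntBox k lo hi f x = IB lo hi 0 k f x.
Proof. revert f. induction k; intros f; simpl; auto. Qed.

Fixpoint PL (lo hi : nat -> R) (j n : nat) : R :=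
  match n with O => 1 | S n' => PL lo hi j n' * (hi (j + n')%nat - lo (j + n')%nat) end.

Lemma IB_peel lo hi j n F x :
  IB lo hi j (S n) F x = Rint (fun s => IB lo hi (S j) n F (upd x j s)) (lo j) (hi j).
Proof.
  revert F. induction n; intros F.
  - simpl. rewrite Nat.add_0_r. reflexivity.
  - change (IB lo hi j (S (S n)) F x) with
      (IB lo hi j (S n) (fun y => Rint (fun s => F (upd y (j + S n)%nat s)) (lo (j + S n)%nat) (hi (j + S n)%nat)) x).
    rewrite IHn. simpl. replace (j + S n)%nat with (S (j + n)%nat) by lia. reflexivity.
Qed.

Lemma IB_upd lo hi j n F z x :
  IB lo hi (S j) n (fun y => F (upd y j z)) x = IB lo hi (S j) n F (upd x j z).
Proof.
  revert F. induction n; intros F; simpl; auto.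
  rewrite <- IHn. f_equal. extensionality y. f_equal. extensionality s.
  rewrite upd_comm; auto. lia.
Qed.

Lemma IB_ext_fix lo hi j n F G x :
  (forall y, (forall i, (i < j)%nat -> y i = x i) -> F y = G y) ->
  IB lo hi j n F x = IB lo hi j n G x.
Proof.
  revert F G. induction n; intros F G H; simpl.
  - apply H. auto.
  - apply IHn. intros y Hy. f_equal. extensionality s. apply H.
    intros i Hi. rewrite upd_neq by lia. auto.
Qed.

Section IBS.
Variable m : nat.
Variables lo hi : nat -> R.
Hypothesis Hlh : forall i, lo i <= hi i.

Lemma IB_Cont j n F : (j + n <= S m)%nat -> Cont m F -> Cont m (IB lo hi j n F).
Proof.
  revert F. induction n; intros F Hn HF; simpl; auto.
  apply IHn; [lia|]. apply Cont_param; auto. lia.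
Qed.

Lemma IB_const j n c x : IB lo hi j n (fun _ => c) x = c * PL lo hi j n.
Proof.
  revert c. induction n; intros c; simpl. - ring.
  - rewrite (IB_ext_fix lo hi j n _ (fun _ => (hi (j+n)%nat - lo (j+n)%nat) * c)).
    + rewrite IHn. ring.
    + intros y _. rewrite Rint_RInt. apply R_const. apply ex_RInt_const.
Qed.



Lemma Cont_plus F G : Cont m F -> Cont m G -> Cont m (fun y => F y + G y).
Proof.
  intros HF HG x eps He.
  destruct (HF x (eps/2)) as [d1 [H1 H1']]; [lra|].
  destruct (HG x (eps/2)) as [d2 [H2 H2']]; [lra|].
  exists (Rmin d1 d2). split. apply Rmin_pos; auto.
  intros y Hy. 
  assert (A := H1' y (fun i Hi => Rlt_le_trans _ _ _ (Hy i Hi) (Rmin_l _ _))).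
  assert (B := H2' y (fun i Hi => Rlt_le_trans _ _ _ (Hy i Hi) (Rmin_r _ _))).
  pose proof (Rabs_triang (F y - F x) (G y - G x)).
  replace (F y + G y - (F x + G x)) with (F y - F x + (G y - G x)) by ring. lra.
Qed.

Lemma Cont_const c : Cont m (fun _ => c).
Proof. intros x eps He. exists 1. split; [lra|]. intros. rewrite Rminus_diag, Rabs_R0; auto. Qed.

Lemma Cont_comp (h : R -> R) F : Cont m F -> (forall r, continuity_pt h r) ->
  Cont m (fun y => h (F y)).
Proof.
  intros HF Hh x eps He.
  destruct (Hh (F x) eps He) as [d1 [H1 H1']].
  destruct (HF x d1 H1) as [d [Hd Hd']].
  exists d. split; auto. intros y Hy.
  destruct (Req_dec (F y) (F x)) as [E|E].
  - rewrite E, Rminus_diag, Rabs_R0; auto.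
  - apply (H1' (F y)). split.
    + split. exact I. auto.
    + simpl. unfold R_dist. apply Hd'; auto.
Qed.

Lemma Cont_mult F G : Cont m F -> Cont m G -> Cont m (fun y => F y * G y).
Proof.
  intros HF HG.
  assert (E : forall y, F y * G y = / 4 * ((F y + G y) ^ 2 - (F y + (-1) * G y) ^ 2)).
  { intros. field. }
  assert (Cs : forall H, Cont m H -> Cont m (fun y => H y ^ 2)).
  { intros H HH. apply (Cont_comp (fun r => r ^ 2)); auto. intros r. reg. }
  assert (Csc : forall c H, Cont m H -> Cont m (fun y => c * H y)).
  { intros c H HH. apply (Cont_comp (fun r => c * r)); auto. intros r. reg. }
  intros x eps He.
  assert (C : Cont m (fun y => / 4 * ((F y + G y) ^ 2 + (-1) * (F y + (-1) * G y) ^ 2))).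
  { apply Csc. apply Cont_plus. apply Cs. apply Cont_plus; auto.
    apply Csc. apply Cs. apply Cont_plus; auto. }
  destruct (C x eps He) as [d [Hd Hd']]. exists d. split; auto. intros y Hy.
  specialize (Hd' y Hy). rewrite !E. 
  replace ((F y + G y) ^ 2 - (F y + -1 * G y) ^ 2) with ((F y + G y) ^ 2 + -1 * (F y + -1 * G y) ^ 2) by ring.
  replace ((F x + G x) ^ 2 - (F x + -1 * G x) ^ 2) with ((F x + G x) ^ 2 + -1 * (F x + -1 * G x) ^ 2) by ring.
  exact Hd'.
Qed.


Lemma Cont_scal c F : Cont m F -> Cont m (fun y => c * F y).
Proof. intros. apply (Cont_comp (fun r => c * r)); auto. intros r. reg. Qed.

Lemma Cont_minus F G : Cont m F -> Cont m G -> Cont m (fun y => F y - G y).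
Proof. intros. unfold Rminus. apply Cont_plus; auto. apply (Cont_comp Ropp); auto. intros; reg. Qed.

Lemma Cont_sq F : Cont m F -> Cont m (fun y => F y ^ 2).
Proof. intros. apply (Cont_comp (fun r => r ^ 2)); auto. intros r. reg. Qed.

Lemma Cont_coord i : (i <= m)%nat -> Cont m (fun y => y i).
Proof. intros Hi x eps He. exists eps. split; auto. Qed.

Lemma Rint_plus_slice F G k y a b : Cont m F -> Cont m G -> (k <= m)%nat ->
  Rint (fun s => F (upd y k s) + G (upd y k s)) a b =
  Rint (fun s => F (upd y k s)) a b + Rint (fun s => G (upd y k s)) a b.
Proof.
  intros HF HG Hk. rewrite Rint_RInt.
  2: apply (Cont_exRInt m (fun z => F z + G z)); auto; apply Cont_plus; auto.
  rewrite !(Cont_Rint m) by auto. apply R_plus; apply (Cont_exRInt m); auto.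
Qed.

Lemma Rint_scal_slice c F k y a b : Cont m F -> (k <= m)%nat ->
  Rint (fun s => c * F (upd y k s)) a b = c * Rint (fun s => F (upd y k s)) a b.
Proof.
  intros HF Hk. rewrite Rint_RInt.
  2: apply (Cont_exRInt m (fun z => c * F z)); auto; apply Cont_scal; auto.
  rewrite !(Cont_Rint m) by auto. apply R_scal; apply (Cont_exRInt m); auto.
Qed.

Lemma Rint_le_slice F G k y a b : Cont m F -> Cont m G -> (k <= m)%nat -> a <= b ->
  (forall s, a <= s <= b -> F (upd y k s) <= G (upd y k s)) ->
  Rint (fun s => F (upd y k s)) a b <= Rint (fun s => G (upd y k s)) a b.
Proof.
  intros HF HG Hk Hab H. rewrite !(Cont_Rint m) by auto.
  apply RInt_le; auto; try (apply (Cont_exRInt m); auto). intros; apply H; lra.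
Qed.

Lemma IB_plus j n F G x : (j + n <= S m)%nat -> Cont m F -> Cont m G ->
  IB lo hi j n (fun y => F y + G y) x = IB lo hi j n F x + IB lo hi j n G x.
Proof.
  revert F G. induction n; intros F G Hn HF HG; simpl; auto.
  rewrite <- IHn; try (apply Cont_param; auto; lia); try lia.
  apply IB_ext_fix. intros y _. apply Rint_plus_slice; auto. lia.
Qed.

Lemma IB_scal j n c F x : (j + n <= S m)%nat -> Cont m F ->
  IB lo hi j n (fun y => c * F y) x = c * IB lo hi j n F x.
Proof.
  revert F. induction n; intros F Hn HF; simpl; auto.
  rewrite <- IHn; try (apply Cont_param; auto; lia); try lia.
  apply IB_ext_fix. intros y _. apply Rint_scal_slice; auto. lia.
Qed.

Lemma IB_mono j n F G x : (j + n <= S m)%nat -> Cont m F -> Cont m G ->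
  (forall y, F y <= G y) -> IB lo hi j n F x <= IB lo hi j n G x.
Proof.
  revert F G. induction n; intros F G Hn HF HG H; simpl; auto.
  apply IHn; try (apply Cont_param; auto; lia); try lia.
  intros y. apply Rint_le_slice; auto. lia.
Qed.

Lemma IB_minus j n F G x : (j + n <= S m)%nat -> Cont m F -> Cont m G ->
  IB lo hi j n (fun y => F y - G y) x = IB lo hi j n F x - IB lo hi j n G x.
Proof.
  intros Hn HF HG. unfold Rminus.
  rewrite (IB_ext_fix _ _ _ _ _ (fun y => F y + (-1) * G y)) by (intros; ring).
  rewrite IB_plus, IB_scal; auto. ring. apply Cont_scal; auto.
Qed.

Lemma PL_pos j n : (forall i, lo i < hi i) -> 0 < PL lo hi j n.
Proof. intros H. induction n; simpl. lra. specialize (H (j+n)%nat). nra. Qed.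

Lemma IB_nonneg j n F x : (j + n <= S m)%nat -> Cont m F -> (forall y, 0 <= F y) ->
  0 <= IB lo hi j n F x.
Proof.
  intros Hn HF H. assert (A := IB_mono j n (fun _ => 0) F x Hn (Cont_const 0) HF H).
  rewrite IB_const in A. lra.
Qed.

Lemma jc_upd2 F j k y : Cont m F -> (j <= m)%nat -> (k <= m)%nat -> j <> k ->
  jc nearR (fun s u => F (upd (upd y j s) k u)).
Proof.
  intros HF Hj Hk Hjk s0 u0 eps He. destruct (HF (upd (upd y j s0) k u0) eps He) as [d [Hd Hd']].
  exists d. split; auto. intros s u Hs Hu. apply Hd'. intros i Hi. unfold nearR in Hu.
  unfold upd. repeat destruct Nat.eq_dec; subst; auto; try congruence; rewrite Rminus_diag, Rabs_R0; auto.
Qed.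

Lemma IB_fubini j n F x a b : (j + S n <= S m)%nat -> Cont m F -> a <= b ->
  Rint (fun s => IB lo hi (S j) n F (upd x j s)) a b =
  IB lo hi (S j) n (fun y => Rint (fun s => F (upd y j s)) a b) x.
Proof.
  revert F. induction n; intros F Hn HF Hab; simpl; auto.
  rewrite IHn; try lia; auto. 2: apply Cont_param; auto; lia.
  apply IB_ext_fix. intros y _.
  set (k := (S (j + n))%nat).
  assert (Ek : (k <= m)%nat) by (unfold k; lia). assert (Ejk: j <> k) by (unfold k; lia).
  transitivity (RInt (fun s => RInt (fun u => F (upd (upd y j s) k u)) (lo k) (hi k)) a b).
  { rewrite Rint_RInt. apply RInt_ext. intros. apply (Cont_Rint m); auto.
    apply (Cont_exRInt m (fun z => Rint (fun u => F (upd z k u)) (lo k) (hi k))); auto.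
    apply Cont_param; auto. lia. }
  transitivity (RInt (fun u => RInt (fun s => F (upd (upd y j s) k u)) a b) (lo k) (hi k)).
  { apply (fubini2 (fun s u => F (upd (upd y j s) k u))). apply jc_upd2; auto. lia. }
  rewrite Rint_RInt. apply RInt_ext. intros u _. rewrite (Cont_Rint m); auto. 2: lia.
  f_equal. extensionality s. rewrite upd_comm; auto.
  apply (Cont_exRInt m (fun z => Rint (fun s => F (upd z j s)) a b)); auto. apply Cont_param; auto. lia.
Qed.

End IBS.


Lemma cpt_mult f g x : continuity_pt f x -> continuity_pt g x -> continuity_pt (fun r => f r * g r) x.
Proof. intros. exact (continuity_pt_mult f g x H H0). Qed.
Lemma cpt_plus f g x : continuity_pt f x -> continuity_pt g x -> continuity_pt (fun r => f r + g r) x.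
Proof. intros. exact (continuity_pt_plus f g x H H0). Qed.
Lemma cpt_minus f g x : continuity_pt f x -> continuity_pt g x -> continuity_pt (fun r => f r - g r) x.
Proof. intros. exact (continuity_pt_minus f g x H H0). Qed.
Lemma cpt_inv f x : continuity_pt f x -> f x <> 0 -> continuity_pt (fun r => / f r) x.
Proof. intros. exact (continuity_pt_inv f x H H0). Qed.
Lemma cpt_const c x : continuity_pt (fun _ => c) x.
Proof. apply continuity_pt_const. intros a b; reflexivity. Qed.
Lemma cpt_sq f x : continuity_pt f x -> continuity_pt (fun r => f r ^ 2) x.
Proof. intros. simpl. apply cpt_mult; auto. apply cpt_mult; auto. apply cpt_const. Qed.

Lemma exR_cont f u v : u <= v -> (forall r, u <= r <= v -> continuity_pt f r) -> ex_RInt f u v.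
Proof. intros Huv H. apply cont_exRInt'. rewrite Rmin_left, Rmax_right; auto. Qed.

Lemma quad_disc A B C : 0 < C -> (forall l, 0 <= A + (-2 * l) * B + l ^ 2 * C) -> B ^ 2 <= A * C.
Proof.
  intros HC H. specialize (H (B / C)).
  replace (A + -2 * (B / C) * B + (B / C) ^ 2 * C) with ((A * C - B ^ 2) / C) in H by (field; lra).
  assert (0 <= A * C - B ^ 2). { apply (Rmult_le_reg_r (/ C)). apply Rinv_0_lt_compat; auto.
    rewrite Rmult_0_l. exact H. }
  lra.
Qed.

Lemma CS_w h w u v : u <= v ->
  (forall r, u <= r <= v -> continuity_pt h r) ->
  (forall r, u <= r <= v -> continuity_pt w r) ->
  (forall r, u <= r <= v -> 0 < w r) ->
  (RInt h u v) ^ 2 <= RInt (fun r => / w r) u v * RInt (fun r => w r * h r ^ 2) u v.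
Proof.
  intros Huv Hh Hw Hp.
  assert (E1 : ex_RInt h u v) by (apply exR_cont; auto).
  assert (E2 : ex_RInt (fun r => / w r) u v).
  { apply exR_cont; auto. intros. apply cpt_inv; auto. specialize (Hp r H); lra. }
  assert (E3 : ex_RInt (fun r => w r * h r ^ 2) u v).
  { apply exR_cont; auto. intros. apply cpt_mult; auto. apply cpt_sq; auto. }
  destruct (Req_dec u v) as [Heq|Hne].
  - subst v. rewrite !R_point. lra.
  - rewrite Rmult_comm. apply quad_disc.
    + apply RInt_gt_0; [lra| |].
      * intros. apply Rinv_0_lt_compat. apply Hp; lra.
      * intros. apply continuity_pt_filterlim. apply cpt_inv; auto. specialize (Hp x H); lra.
    + intros l.
      assert (Ex : RInt (fun r => (w r * h r ^ 2 + (-2 * l) * h r) + l ^ 2 * / w r) u v =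
                   RInt (fun r => w r * h r ^ 2) u v + (-2 * l) * RInt h u v + l ^ 2 * RInt (fun r => / w r) u v).
      { assert (E4 : ex_RInt (fun r => -2 * l * h r) u v) by (apply exR_scal; auto).
        assert (E5 : ex_RInt (fun r => l ^ 2 * / w r) u v) by (apply exR_scal; auto).
        rewrite (R_plus (fun r => w r * h r ^ 2 + -2 * l * h r) (fun r => l ^ 2 * / w r) u v).
        2: apply exR_plus; auto. 2: exact E5.
        rewrite (R_plus (fun r => w r * h r ^ 2) (fun r => -2 * l * h r) u v E3 E4).
        rewrite (R_scal h (-2 * l) u v E1), (R_scal (fun r => / w r) (l ^ 2) u v E2). reflexivity. }
      rewrite <- Ex.
      apply RInt_ge_0; auto.
      * apply exR_plus. apply exR_plus. exact E3. apply exR_scal; exact E1. apply exR_scal; exact E2.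
      * intros r Hr. assert (0 < w r) by (apply Hp; lra).
        replace (w r * h r ^ 2 + -2 * l * h r + l ^ 2 * / w r) with (w r * (h r - l / w r) ^ 2) by (field; apply Rgt_not_eq; exact H).
        apply Rmult_le_pos; [lra|]. apply pow2_ge_0.
Qed.

Lemma CS_1 h u v : u <= v -> (forall r, u <= r <= v -> continuity_pt h r) ->
  (RInt h u v) ^ 2 <= (v - u) * RInt (fun r => h r ^ 2) u v.
Proof.
  intros Huv Hh. assert (A := CS_w h (fun _ => 1) u v Huv Hh (fun r _ => cpt_const 1 r) (fun _ _ => Rlt_0_1)).
  rewrite (RInt_ext (V:=R_CompleteNormedModule) (fun _ : R => / 1) (fun _ => 1)) in A by (intros; apply Rinv_1).
  rewrite (RInt_ext (V:=R_CompleteNormedModule) (fun r : R => 1 * h r ^ 2) (fun r => h r ^ 2)) in A by (intros; apply Rmult_1_l).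
  rewrite R_const in A. lra.
Qed.

Lemma RInt_nonneg f u v : u <= v -> (forall r, u <= r <= v -> continuity_pt f r) ->
  (forall r, u <= r <= v -> 0 <= f r) -> 0 <= RInt f u v.
Proof. intros. apply RInt_ge_0; auto. apply exR_cont; auto. intros; apply H1; lra. Qed.

Lemma RInt_sub f lo hi u v : lo <= u -> u <= v -> v <= hi ->
  (forall r, lo <= r <= hi -> continuity_pt f r) ->
  (forall r, lo <= r <= hi -> 0 <= f r) -> RInt f u v <= RInt f lo hi.
Proof.
  intros H1 H2 H3 Hc Hp.
  assert (X : forall a b, lo <= a -> a <= b -> b <= hi -> ex_RInt f a b).
  { intros. apply exR_cont; auto. intros; apply Hc; lra. }
  rewrite <- (R_chasles f lo u hi); auto; try (apply X; lra).
  rewrite <- (R_chasles f u v hi); auto; try (apply X; lra).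
  assert (0 <= RInt f lo u) by (apply RInt_nonneg; auto; intros; [apply Hc|apply Hp]; lra).
  assert (0 <= RInt f v hi) by (apply RInt_nonneg; auto; intros; [apply Hc|apply Hp]; lra).
  lra.
Qed.

Lemma RInt_le_const f u v M : u <= v -> (forall r, u <= r <= v -> continuity_pt f r) ->
  (forall r, u <= r <= v -> f r <= M) -> RInt f u v <= (v - u) * M.
Proof.
  intros. rewrite <- R_const. apply RInt_le; auto. apply exR_cont; auto.
  apply ex_RInt_const. intros; apply H1; lra.
Qed.

Lemma FTC g g' z s : (forall r, derivable_pt_lim g r (g' r)) -> (forall r, continuity_pt g' r) ->
  RInt g' z s = g s - g z.
Proof.
  intros Hd Hc. apply is_RInt_unique.
  apply (is_RInt_derive (V:=R_CompleteNormedModule) g g').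
  - intros. apply is_derive_Reals. auto.
  - intros. apply continuity_pt_filterlim. auto.
Qed.

Lemma pw_unw g g' b s z : (forall r, derivable_pt_lim g r (g' r)) -> (forall r, continuity_pt g' r) ->
  -b <= s <= b -> -b <= z <= b ->
  (g s - g z) ^ 2 <= 2 * b * RInt (fun r => g' r ^ 2) (-b) b.
Proof.
  intros Hd Hc Hs Hz.
  assert (K : forall s z, -b <= z <= s -> s <= b -> (g s - g z) ^ 2 <= 2 * b * RInt (fun r => g' r ^ 2) (-b) b).
  { intros s0 z0 H1 H2. rewrite <- (FTC g g'); auto.
    eapply Rle_trans. apply CS_1; [lra| intros; auto].
    apply Rmult_le_compat.
    - lra.
    - apply RInt_nonneg; [lra| intros; apply cpt_sq; auto| intros; apply pow2_ge_0].
    - lra.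
    - apply RInt_sub; try lra. intros; apply cpt_sq; auto. intros; apply pow2_ge_0. }
  destruct (Rle_dec z s).
  - apply K; lra.
  - replace ((g s - g z) ^ 2) with ((g z - g s) ^ 2) by ring. apply K; lra.
Qed.


Lemma cont_local f g x : (exists d, 0 < d /\ forall y, Rabs (y - x) < d -> f y = g y) ->
  continuity_pt g x -> continuity_pt f x.
Proof.
  intros [d [Hd H]] Hg. unfold continuity_pt, continue_in, limit1_in, limit_in in *.
  intros eps He. destruct (Hg eps He) as [a [Ha Ha']]. exists (Rmin a d). split.
  apply Rmin_pos; lra. intros y [Hy1 Hy]. simpl in *. unfold R_dist in *.
  assert (Rmin a d <= a) by apply Rmin_l. assert (Rmin a d <= d) by apply Rmin_r.
  rewrite (H y) by lra. rewrite (H x) by (rewrite Rminus_diag, Rabs_R0; lra).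
  apply Ha'. split; auto. lra.
Qed.

Lemma cpt_exp f x : continuity_pt f x -> continuity_pt (fun r => exp (f r)) x.
Proof.
  intros H. apply (continuity_pt_comp f exp x H). apply derivable_continuous_pt.
  exists (exp (f x)). apply derivable_pt_lim_exp.
Qed.
Lemma cpt_ln x : 0 < x -> continuity_pt ln x.
Proof. intros. apply derivable_continuous_pt. exists (/ x). apply derivable_pt_lim_ln; auto. Qed.
Lemma cpt_abs f x : continuity_pt f x -> continuity_pt (fun r => Rabs (f r)) x.
Proof. intros H. apply (continuity_pt_comp f Rabs x H). apply Rcontinuity_abs. Qed.
Lemma cpt_id x : continuity_pt (fun r => r) x.
Proof. apply derivable_continuous_pt. exists 1. apply derivable_pt_lim_id. Qed.
Lemma cpt_scal c f x : continuity_pt f x -> continuity_pt (fun r => c * f r) x.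
Proof. intros. apply cpt_mult; auto. apply cpt_const. Qed.

Definition kexp (p p' s : R) := p * ((ln s - Rabs (ln s)) / 2) + p' * ((ln s + Rabs (ln s)) / 2).

Lemma bpow_exp s p p' : 0 < s -> bpow s p p' = exp (kexp p p' s).
Proof.
  intros Hs. unfold bpow, pw, kexp, Rpower.
  destruct (Rle_dec s 1) as [H1|H1]; destruct (Req_EM_T s 0); try lra.
  - assert (ln s <= 0) by (rewrite <- ln_1; apply ln_le; lra).
    rewrite Rabs_left1 by auto. f_equal. field.
  - assert (0 < ln s) by (rewrite <- ln_1; apply ln_increasing; lra).
    rewrite Rabs_right by lra. f_equal. field.
Qed.

Lemma cpt_kexp p p' s : 0 < s -> continuity_pt (kexp p p') s.
Proof.
  intros Hs. unfold kexp.
  assert (L := cpt_ln s Hs). assert (A := cpt_abs ln s L).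
  apply cpt_plus; apply cpt_scal.
  - apply (cpt_mult (fun r => ln r - Rabs (ln r)) (fun _ => / 2)). apply cpt_minus; auto. apply cpt_const.
  - apply (cpt_mult (fun r => ln r + Rabs (ln r)) (fun _ => / 2)). apply cpt_plus; auto. apply cpt_const.
Qed.

Definition wt (p p' r : R) := bpow (Rabs r) p p'.

Lemma wt_cont p p' r : 0 <= p -> 0 <= p' -> continuity_pt (wt p p') r.
Proof.
  intros Hp Hp'. destruct (Req_dec r 0) as [E|E].
  - subst r. destruct (Req_dec p 0) as [E0|E0].
    + apply (cont_local _ (fun _ => 1)); [|apply cpt_const].
      exists 1. split; [lra|]. intros y Hy. rewrite Rminus_0_r in Hy.
      unfold wt, bpow, pw. destruct (Rle_dec (Rabs y) 1); [|lra].
      destruct (Req_EM_T (Rabs y) 0). destruct Req_EM_T; [auto|lra].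
      subst p. unfold Rpower. rewrite Rmult_0_l. apply exp_0.
    + assert (Hpp : 0 < p) by lra.
      unfold continuity_pt, continue_in, limit1_in, limit_in. intros eps He.
      exists (Rmin 1 (Rpower eps (/ p))). split.
      { apply Rmin_pos; [lra|]. unfold Rpower. apply exp_pos. }
      intros y [_ Hy]. simpl in *. unfold R_dist in *. rewrite Rminus_0_r in Hy.
      assert (W0 : wt p p' 0 = 0).
      { unfold wt, bpow, pw. rewrite Rabs_R0. destruct Rle_dec; [|lra].
        destruct Req_EM_T; [|lra]. destruct Req_EM_T; [lra|auto]. }
      rewrite W0, Rminus_0_r. unfold wt, bpow, pw.
      assert (Rmin 1 (Rpower eps (/ p)) <= 1) by apply Rmin_l.
      assert (Rmin 1 (Rpower eps (/ p)) <= Rpower eps (/ p)) by apply Rmin_r.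
      destruct (Rle_dec (Rabs y) 1); [|lra].
      destruct (Req_EM_T (Rabs y) 0) as [Z|Z].
      * destruct Req_EM_T; [lra|]. rewrite Rabs_R0; lra.
      * assert (Hpos : 0 < Rpower (Rabs y) p) by (unfold Rpower; apply exp_pos).
        rewrite Rabs_right by lra.
        assert (Rpower (Rabs y) p < Rpower (Rpower eps (/ p)) p).
        { apply Rlt_Rpower_l; auto. split. pose proof (Rabs_pos y); lra. lra. }
        rewrite Rpower_mult, Rinv_l, Rpower_1 in H1; lra.
  - unfold wt. apply (continuity_pt_comp Rabs (fun s => bpow s p p') r).
    + apply Rcontinuity_abs.
    + assert (Hr : 0 < Rabs r) by (apply Rabs_pos_lt; auto).
      apply (cont_local _ (fun s => exp (kexp p p' s))).
      * exists (Rabs r). split; auto. intros y Hy. apply bpow_exp.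
        assert (Rabs r - y <= Rabs (y - Rabs r)).
        { rewrite <- (Rabs_Ropp (y - Rabs r)). replace (- (y - Rabs r)) with (Rabs r - y) by ring. apply Rle_abs. }
        lra.
      * apply cpt_exp. apply cpt_kexp; auto.
Qed.

Lemma wt_pos p p' r : r <> 0 -> 0 < wt p p' r.
Proof. intros. unfold wt. rewrite bpow_exp. apply exp_pos. apply Rabs_pos_lt; auto. Qed.

Lemma wt_nonneg p p' r : 0 <= wt p p' r.
Proof.
  destruct (Req_dec r 0). - subst. unfold wt, bpow, pw. rewrite Rabs_R0.
    destruct Rle_dec; destruct Req_EM_T; try lra; destruct Req_EM_T; lra.
  - left. apply wt_pos; auto.
Qed.

Lemma wt_even p p' r : wt p p' (- r) = wt p p' r.
Proof. unfold wt. rewrite Rabs_Ropp. auto. Qed.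

Lemma wt_inv_bound d1 d1' r : 0 <= d1' -> 0 < r ->
  / wt (2 * d1) (2 * d1') r <= Rpower r (- (2 * d1)) + 1.
Proof.
  intros Hd Hr. unfold wt. rewrite Rabs_right by lra. unfold bpow, pw.
  assert (Hp : 0 < Rpower r (- (2 * d1))) by (unfold Rpower; apply exp_pos).
  destruct (Req_EM_T r 0); [lra|].
  destruct (Rle_dec r 1).
  - rewrite <- Rpower_Ropp. lra.
  - assert (1 <= Rpower r (2 * d1')).
    { unfold Rpower. rewrite <- exp_0. 
      assert (0 <= 2 * d1' * ln r). { apply Rmult_le_pos; [lra|]. left. rewrite <- ln_1. apply ln_increasing; lra. }
      destruct H; [left; apply exp_increasing; lra| rewrite <- H; lra]. }
    assert (/ Rpower r (2 * d1') <= 1).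
    { rewrite <- Rinv_1. apply Rinv_le_contravar; lra. }
    lra.
Qed.

Lemma wt_lower p p' a z : 0 <= p -> 0 <= p' -> 0 < a -> a / 2 <= z <= a ->
  Rpower (Rmin (a / 2) (1 / 2)) p <= wt p p' z.
Proof.
  intros Hp Hp' Ha Hz. unfold wt. rewrite Rabs_right by lra. unfold bpow, pw.
  destruct (Req_EM_T z 0); [lra|].
  assert (Hm : 0 < Rmin (a/2) (1/2)) by (apply Rmin_pos; lra).
  assert (Rmin (a/2) (1/2) <= a/2) by apply Rmin_l.
  assert (Rmin (a/2) (1/2) <= 1/2) by apply Rmin_r.
  destruct (Rle_dec z 1).
  - apply Rle_Rpower_l; auto. lra.
  - apply Rle_trans with 1.
    + unfold Rpower.
      assert (ln (Rmin (a/2) (1/2)) < 0) by (rewrite <- ln_1; apply ln_increasing; lra).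
      assert (HH : p * ln (Rmin (a/2) (1/2)) <= 0) by nra.
      assert (H3 : exp (p * ln (Rmin (a/2) (1/2))) <= exp 0).
      { destruct HH as [HH|HH]; [left; apply exp_increasing; lra| rewrite HH; lra]. }
      rewrite exp_0 in H3. exact H3.
    + unfold Rpower.
      assert (HH : 0 <= p' * ln z). { apply Rmult_le_pos; [lra|]. left. rewrite <- ln_1. apply ln_increasing; lra. }
      assert (H3 : exp 0 <= exp (p' * ln z)).
      { destruct HH as [HH|HH]; [left; apply exp_increasing; lra| rewrite <- HH; lra]. }
      rewrite exp_0 in H3. exact H3.
Qed.


Lemma FTC_int g g' u v : u <= v ->
  (forall r, u <= r <= v -> derivable_pt_lim g r (g' r)) ->
  (forall r, u <= r <= v -> continuity_pt g' r) ->
  RInt g' u v = g v - g u.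
Proof.
  intros Huv Hd Hc. apply is_RInt_unique.
  apply (is_RInt_derive (V:=R_CompleteNormedModule) g g').
  - intros. apply is_derive_Reals. apply Hd. rewrite Rmin_left, Rmax_right in H; auto.
  - intros. apply continuity_pt_filterlim. apply Hc. rewrite Rmin_left, Rmax_right in H; auto.
Qed.

Lemma cpt_rpow r c : 0 < r -> continuity_pt (fun x => Rpower x c) r.
Proof. intros. apply derivable_continuous_pt. eexists. apply derivable_pt_lim_power; auto. Qed.

Section W.
Variables d1 d1' : R.
Hypothesis Hd1 : 0 <= d1 < 1/2.
Hypothesis Hd1' : 0 <= d1'.
Let q := 1 - 2 * d1.
Let W := wt (2 * d1) (2 * d1').

Lemma q_pos : 0 < q.
Proof. unfold q; lra. Qed.

Lemma W_cont r : continuity_pt W r.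
Proof. apply wt_cont; lra. Qed.

Lemma antider e s : 0 < e -> e <= s ->
  RInt (fun r => Rpower r (- (2 * d1))) e s = (Rpower s q - Rpower e q) / q.
Proof.
  intros He Hes. assert (Hq := q_pos).
  rewrite (FTC_int (fun r => / q * Rpower r q)); auto.
  - match goal with |- ?a = ?b => change (@eq R a b) end. field. lra.
  - intros r Hr. replace (Rpower r (- (2 * d1))) with (/ q * (q * Rpower r (q - 1))).
    + apply (derivable_pt_lim_scal (fun x => Rpower x q)). apply derivable_pt_lim_power. lra.
    + replace (q - 1) with (- (2 * d1)) by (unfold q; ring). field. lra.
  - intros. apply cpt_rpow. lra.
Qed.

Lemma half g g' s : (forall r, derivable_pt_lim g r (g' r)) -> (forall r, continuity_pt g' r) -> 0 < s ->
  (g s - g 0) ^ 2 <= (Rpower s q / q + s) * RInt (fun r => W r * g' r ^ 2) 0 s.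
Proof.
  intros Hd Hc Hs. assert (Hq := q_pos).
  set (M := (Rpower s q / q + s) * RInt (fun r => W r * g' r ^ 2) 0 s).
  assert (CW2 : forall r, continuity_pt (fun r => W r * g' r ^ 2) r).
  { intros. apply cpt_mult. apply W_cont. apply cpt_sq; auto. }
  assert (NW2 : forall r, 0 <= W r * g' r ^ 2).
  { intros. apply Rmult_le_pos. apply wt_nonneg. apply pow2_ge_0. }
  assert (Key : forall e, 0 < e < s -> (g s - g e) ^ 2 <= M).
  { intros e He. rewrite <- (FTC_int g g' e s) by (auto; lra).
    eapply Rle_trans. apply (CS_w g' W e s); try lra; auto.
    - intros; apply W_cont.
    - intros. apply wt_pos. lra.
    - unfold M. apply Rmult_le_compat.
      + apply RInt_nonneg; try lra. intros. apply cpt_inv. apply W_cont. apply Rgt_not_eq. apply wt_pos. lra.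
        intros. left. apply Rinv_0_lt_compat. apply wt_pos. lra.
      + apply RInt_nonneg; try lra; auto.
      + apply Rle_trans with (RInt (fun r => Rpower r (- (2 * d1)) + 1) e s).
        * apply RInt_le; try lra.
          -- apply exR_cont; try lra. intros. apply cpt_inv. apply W_cont. apply Rgt_not_eq. apply wt_pos. lra.
          -- apply exR_cont; try lra. intros. apply cpt_plus. apply cpt_rpow; lra. apply cpt_const.
          -- intros. apply wt_inv_bound; lra.
        * assert (E1 : ex_RInt (fun r => Rpower r (- (2 * d1))) e s) by (apply exR_cont; try lra; intros; apply cpt_rpow; lra).
          rewrite (R_plus _ _ e s E1 (ex_RInt_const e s 1)).
          rewrite antider by lra. rewrite R_const.
          assert (0 < Rpower e q) by (unfold Rpower; apply exp_pos).
          apply Rplus_le_compat; [|lra]. unfold Rdiv. apply Rmult_le_compat_r. left; apply Rinv_0_lt_compat; lra. lra.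
      + apply (RInt_sub _ 0 s); try lra; auto. }
  apply Rnot_lt_le. intros Hlt.
  set (psi := fun e => (g s - g e) ^ 2).
  assert (Cpsi : continuity_pt psi 0).
  { unfold psi. apply cpt_sq. apply cpt_minus. apply cpt_const.
    apply derivable_continuous_pt. exists (g' 0). apply Hd. }
  unfold continuity_pt, continue_in, limit1_in, limit_in in Cpsi.
  assert (Hpos : psi 0 - M > 0) by (unfold psi; lra).
  destruct (Cpsi _ Hpos) as [d [Hd0 Hd0']].
  set (e := Rmin (d / 2) (s / 2)).
  assert (He : 0 < e) by (apply Rmin_pos; lra).
  assert (e <= d / 2) by apply Rmin_l. assert (e <= s / 2) by apply Rmin_r.
  assert (A : Rabs (psi e - psi 0) < psi 0 - M).
  { apply (Hd0' e). split. split. exact I. lra. simpl. unfold R_dist. rewrite Rminus_0_r, Rabs_right; lra. }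
  assert (B := Key e ltac:(lra)). fold (psi e) in B.
  assert (psi 0 - psi e <= Rabs (psi e - psi 0)) by (rewrite <- Rabs_Ropp; replace (- (psi e - psi 0)) with (psi 0 - psi e) by ring; apply Rle_abs).
  unfold psi in *. lra.
Qed.


Lemma half_neg g g' s : (forall r, derivable_pt_lim g r (g' r)) -> (forall r, continuity_pt g' r) -> s < 0 ->
  (g s - g 0) ^ 2 <= (Rpower (- s) q / q + (- s)) * RInt (fun r => W r * g' r ^ 2) s 0.
Proof.
  intros Hd Hc Hs.
  set (h := fun r => g (- r)). set (h' := fun r => - g' (- r)).
  assert (Hdh : forall r, derivable_pt_lim h r (h' r)).
  { intros r. unfold h, h'. replace (- g' (- r)) with (g' (- r) * (-1)) by ring.
    apply (derivable_pt_lim_comp (fun x => - x) g r (-1) (g' (- r))).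
    - apply (derivable_pt_lim_opp id r 1). apply derivable_pt_lim_id.
    - apply Hd. }
  assert (Hch : forall r, continuity_pt h' r).
  { intros r. unfold h'. apply (continuity_pt_opp (fun x => g' (- x))).
    apply (continuity_pt_comp (fun x => - x) g' r).
    - apply (continuity_pt_opp (fun x => x)). apply cpt_id.
    - apply Hc. }
  assert (H := half h h' (- s) Hdh Hch ltac:(lra)).
  unfold h in H at 1 2. rewrite Ropp_involutive, Ropp_0 in H.
  set (F := fun r => W r * g' r ^ 2).
  assert (CF : forall r, continuity_pt F r).
  { intros. unfold F. apply cpt_mult. apply W_cont. apply cpt_sq; auto. }
  assert (E : RInt (fun r => W r * h' r ^ 2) 0 (- s) = RInt F s 0).
  { assert (C : RInt (fun y => scal (-1) (F (-1 * y + 0))) 0 (- s) = RInt F (-1 * 0 + 0) (-1 * (- s) + 0)).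
    { apply (RInt_comp_lin (V:=R_CompleteNormedModule)). apply cont_exRInt; auto. }
    replace (-1 * 0 + 0) with 0 in C by ring. replace (-1 * (- s) + 0) with s in C by ring.
    assert (EF : ex_RInt (fun y => F (-1 * y + 0)) 0 (- s)).
    { apply cont_exRInt. intros r. apply (continuity_pt_comp (fun y => -1 * y + 0) F r); auto.
      apply cpt_plus. apply cpt_scal. apply cpt_id. apply cpt_const. }
    change (RInt (fun y => -1 * F (-1 * y + 0)) 0 (- s) = RInt F 0 s) in C.
    rewrite (R_scal _ (-1) _ _ EF) in C.
    rewrite (R_swap F 0 s) by (apply cont_exRInt; auto).
    rewrite <- C.
    match goal with |- ?a = ?b => change (@eq R a b) end.
    rewrite (RInt_ext (V:=R_CompleteNormedModule) (fun r => W r * h' r ^ 2) (fun y => F (-1 * y + 0))).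
    rewrite Ropp_mult_distr_l. replace (- -1) with 1 by ring. rewrite Rmult_1_l. reflexivity.
    intros x _. unfold F, h'. replace (-1 * x + 0) with (- x) by ring. unfold W. rewrite wt_even.
    match goal with |- ?a = ?b => change (@eq R a b) end. ring. }
  rewrite E in H. exact H.
Qed.

Lemma W_point g g' a s z : (forall r, derivable_pt_lim g r (g' r)) -> (forall r, continuity_pt g' r) -> 0 < a ->
  -a <= s <= a -> -a <= z <= a ->
  (g s - g z) ^ 2 <= 4 * (Rpower a q / q + a) * RInt (fun r => W r * g' r ^ 2) (-a) a.
Proof.
  intros Hd Hc Ha Hs Hz. assert (Hq := q_pos).
  set (I := RInt (fun r => W r * g' r ^ 2) (-a) a).
  assert (CF : forall r, continuity_pt (fun r => W r * g' r ^ 2) r).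
  { intros. apply cpt_mult. apply W_cont. apply cpt_sq; auto. }
  assert (NF : forall r, 0 <= W r * g' r ^ 2).
  { intros. apply Rmult_le_pos. apply wt_nonneg. apply pow2_ge_0. }
  assert (I0 : 0 <= I) by (apply RInt_nonneg; auto; lra).
  assert (Pa : 0 < Rpower a q) by (unfold Rpower; apply exp_pos).
  assert (P : forall s, -a <= s <= a -> (g s - g 0) ^ 2 <= (Rpower a q / q + a) * I).
  { intros t Ht. destruct (Rtotal_order t 0) as [Hn|[H0|Hp]].
    - eapply Rle_trans. apply half_neg; auto.
      apply Rmult_le_compat.
      + assert (0 < Rpower (- t) q) by (unfold Rpower; apply exp_pos).
        apply Rplus_le_le_0_compat; [|lra]. left. apply Rdiv_lt_0_compat; lra.
      + apply RInt_nonneg; auto; lra.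
      + apply Rplus_le_compat; [|lra]. unfold Rdiv. apply Rmult_le_compat_r. left; apply Rinv_0_lt_compat; lra.
        apply Rle_Rpower_l; lra.
      + apply RInt_sub; auto; lra.
    - subst. rewrite Rminus_diag. simpl. rewrite Rmult_0_l.
      apply Rmult_le_pos; auto. apply Rplus_le_le_0_compat; [|lra]. left. apply Rdiv_lt_0_compat; lra.
    - eapply Rle_trans. apply half; auto.
      apply Rmult_le_compat.
      + assert (0 < Rpower t q) by (unfold Rpower; apply exp_pos).
        apply Rplus_le_le_0_compat; [|lra]. left. apply Rdiv_lt_0_compat; lra.
      + apply RInt_nonneg; auto; lra.
      + apply Rplus_le_compat; [|lra]. unfold Rdiv. apply Rmult_le_compat_r. left; apply Rinv_0_lt_compat; lra.
        apply Rle_Rpower_l; lra.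
      + apply RInt_sub; auto; lra. }
  assert (A := P s Hs). assert (B := P z Hz).
  assert ((g s - g z) ^ 2 <= 2 * (g s - g 0) ^ 2 + 2 * (g z - g 0) ^ 2).
  { assert (0 <= (g s + g z - 2 * g 0) ^ 2) by apply pow2_ge_0. nra. }
  lra.
Qed.

End W.


Lemma avg1d g zl zh s E : zl < zh -> (forall r, continuity_pt g r) ->
  (forall z, zl <= z <= zh -> (g s - g z) ^ 2 <= E) ->
  (g s - / (zh - zl) * RInt g zl zh) ^ 2 <= E.
Proof.
  intros Hz Hg H. set (L := zh - zl).
  assert (HL : 0 < L) by (unfold L; lra).
  assert (Eg : ex_RInt g zl zh) by (apply cont_exRInt; auto).
  assert (Ec : ex_RInt (fun _ => g s) zl zh) by apply ex_RInt_const.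
  assert (X : g s - / L * RInt g zl zh = / L * RInt (fun z => g s - g z) zl zh).
  { rewrite (R_minus _ _ _ _ Ec Eg). rewrite R_const. fold L. field. lra. }
  rewrite X.
  assert (C := CS_1 (fun z => g s - g z) zl zh ltac:(lra) (fun r _ => cpt_minus _ _ r (cpt_const _ r) (Hg r))).
  fold L in C.
  assert (B : RInt (fun r => (g s - g r) ^ 2) zl zh <= L * E).
  { apply RInt_le_const; try lra. intros. apply cpt_sq. apply cpt_minus. apply cpt_const. auto. auto. }
  replace ((/ L * RInt (fun z => g s - g z) zl zh) ^ 2) with (/ L ^ 2 * (RInt (fun z => g s - g z) zl zh) ^ 2) by (field; lra).
  apply Rle_trans with (/ L ^ 2 * (L * (L * E))).
  - apply Rmult_le_compat_l. left. apply Rinv_0_lt_compat. nra.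
    eapply Rle_trans. exact C. apply Rmult_le_compat_l; lra.
  - right. field. lra.
Qed.

Lemma CS_avg h zl zh : zl < zh -> (forall r, continuity_pt h r) ->
  (/ (zh - zl) * RInt h zl zh) ^ 2 <= / (zh - zl) * RInt (fun z => h z ^ 2) zl zh.
Proof.
  intros Hz Hh. assert (C := CS_1 h zl zh ltac:(lra) (fun r _ => Hh r)).
  replace ((/ (zh - zl) * RInt h zl zh) ^ 2) with (/ (zh - zl) ^ 2 * (RInt h zl zh) ^ 2) by (field; lra).
  apply Rle_trans with (/ (zh - zl) ^ 2 * ((zh - zl) * RInt (fun r => h r ^ 2) zl zh)).
  - apply Rmult_le_compat_l; auto. left. apply Rinv_0_lt_compat. nra.
  - right. field. lra.
Qed.

Section STEP.
Variable m : nat.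
Variables lo hi : nat -> R.
Hypothesis Hlh : forall i, lo i <= hi i.

Lemma sq_split u v : (u + v) ^ 2 <= 2 * u ^ 2 + 2 * v ^ 2.
Proof. assert (0 <= (u - v) ^ 2) by apply pow2_ge_0. nra. Qed.

Lemma step (phi E : (nat -> R) -> R) (R0 : R -> R) j n x zl zh V :
  Cont m phi -> Cont m E -> (j + S n <= S m)%nat -> lo j <= zl -> zl < zh -> zh <= hi j -> 0 < V ->
  (forall r, continuity_pt R0 r) ->
  (forall y s z, lo j <= s <= hi j -> zl <= z <= zh -> (phi (upd y j s) - phi (upd y j z)) ^ 2 <= E y) ->
  (forall z, zl <= z <= zh ->
     IB lo hi (S j) n (fun y => (phi y - IB lo hi (S j) n phi (upd x j z) / V) ^ 2) (upd x j z) <= R0 z) ->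
  IB lo hi j (S n) (fun y => (phi y - / (zh - zl) * RInt (fun z => IB lo hi (S j) n phi (upd x j z) / V) zl zh) ^ 2) x
  <= 2 * (hi j - lo j) * IB lo hi (S j) n E x + 2 * (hi j - lo j) / (zh - zl) * RInt R0 zl zh.
Proof.
  intros Cphi CE Hn Hzl Hz Hzh HV CR H1 H2.
  assert (Hj : (j <= m)%nat) by lia.
  set (L := zh - zl). assert (HL : 0 < L) by (unfold L; lra).
  set (Mz := fun z => IB lo hi (S j) n phi (upd x j z) / V).
  set (K0 := / L * RInt Mz zl zh).
  set (c := fun y => / L * Rint (fun z => phi (upd y j z)) zl zh).
  assert (CIB : Cont m (IB lo hi (S j) n phi)) by (apply IB_Cont; auto; lia).
  assert (CMz : forall r, continuity_pt Mz r).
  { intros r. unfold Mz. apply (cpt_mult (fun z => IB lo hi (S j) n phi (upd x j z)) (fun _ => / V)).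
    apply (Cont_slice m); auto. apply cpt_const. }
  assert (Cc : Cont m c) by (apply Cont_scal; apply Cont_param; auto; lra).
  set (G1 := fun y => (phi y - c y) ^ 2).
  set (G2 := fun y => (c y - K0) ^ 2).
  assert (CG1 : Cont m G1) by (apply Cont_sq; apply Cont_minus; auto).
  assert (CG2 : Cont m G2) by (apply Cont_sq; apply Cont_minus; auto; apply Cont_const).
  assert (Cmain : Cont m (fun y => (phi y - K0) ^ 2)) by (apply Cont_sq; apply Cont_minus; auto; apply Cont_const).
  eapply Rle_trans.
  { apply (IB_mono m lo hi Hlh j (S n) _ (fun y => 2 * G1 y + 2 * G2 y)); auto.
    - apply Cont_plus; apply Cont_scal; auto.
    - intros y. unfold G1, G2. replace (phi y - K0) with ((phi y - c y) + (c y - K0)) by ring. apply sq_split. }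
  rewrite (IB_plus m lo hi Hlh), (IB_scal m lo hi Hlh), (IB_scal m lo hi Hlh); auto; try (apply Cont_scal; auto).
  apply Rplus_le_compat.
  -
    rewrite Rmult_assoc. apply Rmult_le_compat_l; [lra|].
    rewrite IB_peel. rewrite (IB_fubini m lo hi Hlh); auto.
    rewrite <- (IB_scal m lo hi Hlh); auto; try lia.
    apply (IB_mono m lo hi Hlh); auto; try lia.
    + apply Cont_param; auto.
    + apply Cont_scal; auto.
    + intros y. rewrite (Cont_Rint m) by auto.
      apply RInt_le_const; auto.
      * intros. apply (Cont_slice m); auto.
      * intros s Hs. unfold G1, c.
        replace (Rint (fun z => phi (upd (upd y j s) j z)) zl zh) with (RInt (fun z => phi (upd y j z)) zl zh).
        2:{ rewrite (Cont_Rint m) by auto. apply RInt_ext. intros. rewrite upd_upd. reflexivity. }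
        unfold L. apply (avg1d (fun z => phi (upd y j z))); auto.
        intros. apply (Cont_slice m); auto.
  -
    set (G3 := fun y => (phi y - Mz (y j)) ^ 2).
    assert (CG3 : Cont m G3).
    { apply Cont_sq. apply Cont_minus; auto. apply (Cont_comp m Mz (fun y => y j)); auto. apply Cont_coord; auto. }
    assert (CIB3 : Cont m (IB lo hi (S j) n G3)) by (apply IB_Cont; auto; lia).
    assert (Inv : forall s, IB lo hi (S j) n G2 (upd x j s) = IB lo hi (S j) n G2 x).
    { intros s. rewrite <- IB_upd. apply IB_ext_fix. intros y _. unfold G2, c.
      f_equal. f_equal. f_equal. f_equal. extensionality z. rewrite upd_upd. reflexivity. }
    assert (T2a : IB lo hi (S j) n G2 x <= / L * RInt R0 zl zh).
    { eapply Rle_trans.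
      { apply (IB_mono m lo hi Hlh (S j) n G2 (fun y => / L * Rint (fun z => G3 (upd y j z)) zl zh)); auto; try lia.
        - apply Cont_scal. apply Cont_param; auto; lra.
        - intros y. unfold G2, c, K0.
          rewrite (Cont_Rint m) by auto. rewrite (Cont_Rint m G3) by auto.
          replace (/ L * RInt (fun z => phi (upd y j z)) zl zh - / L * RInt Mz zl zh)
            with (/ L * RInt (fun z => phi (upd y j z) - Mz z) zl zh).
          + unfold L. eapply Rle_trans. apply CS_avg; auto.
            * intros r. apply cpt_minus; auto. apply (Cont_slice m); auto.
            * right. f_equal. apply RInt_ext. intros z _. unfold G3. rewrite upd_eq. reflexivity.
          + rewrite R_minus. ring. apply (Cont_exRInt m); auto. apply cont_exRInt; auto. }
      rewrite (IB_scal m lo hi Hlh); try lia. 2: apply Cont_param; auto; lra.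
      apply Rmult_le_compat_l. left; apply Rinv_0_lt_compat; auto.
      rewrite <- (IB_fubini m lo hi Hlh); auto; try lra.
      rewrite Rint_RInt. 2: apply (Cont_exRInt m (IB lo hi (S j) n G3)); auto.
      apply RInt_le; try lra.
      - apply (Cont_exRInt m (IB lo hi (S j) n G3)); auto.
      - apply cont_exRInt; auto.
      - intros z Hz'. rewrite (IB_ext_fix lo hi (S j) n G3 (fun y => (phi y - IB lo hi (S j) n phi (upd x j z) / V) ^ 2)).
        + apply H2; lra.
        + intros y Hy. unfold G3, Mz. rewrite (Hy j) by lia. rewrite upd_eq. reflexivity. }
    rewrite IB_peel.
    replace (fun s => IB lo hi (S j) n G2 (upd x j s)) with (fun _ : R => IB lo hi (S j) n G2 x)
      by (extensionality s; symmetry; apply Inv).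
    rewrite Rint_RInt by apply ex_RInt_const. rewrite R_const.
    unfold L in T2a.
    assert (lo j <= hi j) by auto.
    assert (0 <= hi j - lo j) by lra.
    apply Rle_trans with (2 * ((hi j - lo j) * (/ (zh - zl) * RInt R0 zl zh))).
    - apply Rmult_le_compat_l; [lra|]. apply Rmult_le_compat_l; auto.
    - right. unfold L. field. lra.
Qed.

End STEP.


Fixpoint Kf (n : nat) : R := match n with O => 1 | S n' => 8 + 2 * Kf n' end.
Lemma Kf_pos n : 0 < Kf n.
Proof. induction n; simpl; lra. Qed.

Section PHI.
Variable m : nat.
Variable phi : (nat -> R) -> R.
Variable D : nat -> (nat -> R) -> R.
Hypothesis HC : C1c m phi D.

Lemma phi_Cont : Cont m phi.
Proof. destruct HC as [_ [_ [H _]]]. exact H. Qed.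

Lemma D_Cont i : (i <= m)%nat -> Cont m (D i).
Proof. destruct HC as [_ [_ [_ [H _]]]]. intros Hi x eps He. apply H; auto. Qed.

Lemma phi_der i y : (i <= m)%nat -> forall r, derivable_pt_lim (fun s => phi (upd y i s)) r (D i (upd y i r)).
Proof.
  destruct HC as [_ [H _]]. intros Hi r. specialize (H i (upd y i r) Hi).
  rewrite upd_eq in H. replace (fun s => phi (upd y i s)) with (fun s => phi (upd (upd y i r) i s)).
  exact H. extensionality s. rewrite upd_upd. reflexivity.
Qed.

Fixpoint Sfrom (n : nat) (y : nat -> R) : R :=
  match n with O => 0 | S n' => D (m - n')%nat y ^ 2 + Sfrom n' y end.

Lemma Sfrom_Cont n : (n <= S m)%nat -> Cont m (Sfrom n).
Proof.
  induction n; intros Hn; simpl. apply Cont_const.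
  apply Cont_plus. apply Cont_sq. apply D_Cont. lia. apply IHn. lia.
Qed.

Lemma Sfrom_nonneg n y : 0 <= Sfrom n y.
Proof. induction n; simpl. lra. assert (0 <= D (m - n)%nat y ^ 2) by apply pow2_ge_0. lra. Qed.

Lemma Sfrom_sum1 y : Sfrom m y = sum1 m (fun i => D i y ^ 2).
Proof.
  assert (G : forall n, (n <= m)%nat -> Sfrom n y + sum1 (m - n) (fun i => D i y ^ 2) = sum1 m (fun i => D i y ^ 2)).
  { induction n; intros Hn.
    - simpl. rewrite Nat.sub_0_r. ring.
    - rewrite <- IHn by lia. simpl. replace (m - n)%nat with (S (m - S n)) by lia. simpl.
      replace (S (m - S n)) with (m - n)%nat by lia. ring. }
  rewrite <- (G m) by lia. rewrite Nat.sub_diag. simpl. ring.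
Qed.

Definition loB (a b : R) := fun i : nat => if Nat.eq_dec i 0 then - a else - b.
Definition hiB (a b : R) := fun i : nat => if Nat.eq_dec i 0 then a else b.

Lemma lohiB a b : 0 < a -> 0 < b -> forall i, loB a b i <= hiB a b i.
Proof. intros. unfold loB, hiB. destruct Nat.eq_dec; lra. Qed.

Lemma meanK a b j n x : 0 < a -> 0 < b -> (1 <= j)%nat -> (j + S n <= S m)%nat ->
  / (b - - b) * RInt (fun z => IB (loB a b) (hiB a b) (S j) n phi (upd x j z) / (2 * b) ^ n) (- b) b
  = IB (loB a b) (hiB a b) j (S n) phi x / (2 * b) ^ S n.
Proof.
  intros Ha Hb Hj Hn. rewrite IB_peel.
  assert (El : loB a b j = - b) by (unfold loB; destruct (Nat.eq_dec j 0); [lia|auto]).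
  assert (Eh : hiB a b j = b) by (unfold hiB; destruct (Nat.eq_dec j 0); [lia|auto]).
  rewrite El, Eh.
  assert (CI : Cont m (IB (loB a b) (hiB a b) (S j) n phi)) by (apply (IB_Cont m); [apply lohiB; auto|lia|apply phi_Cont]).
  rewrite Rint_RInt by (apply (Cont_exRInt m); auto; lia).
  rewrite (RInt_ext (V:=R_CompleteNormedModule) _ (fun z => / (2 * b) ^ n * IB (loB a b) (hiB a b) (S j) n phi (upd x j z))).
  2:{ intros. unfold Rdiv. apply Rmult_comm. }
  rewrite R_scal by (apply (Cont_exRInt m); auto; lia).
  simpl. match goal with |- ?u = ?v => change (@eq R u v) end. field. split; [|lra]. apply pow_nonzero. lra.
Qed.


Lemma poincE n : (n <= m)%nat -> forall a b x, 0 < a -> 0 < b ->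
  IB (loB a b) (hiB a b) (S m - n) n
     (fun y => (phi y - IB (loB a b) (hiB a b) (S m - n) n phi x / (2 * b) ^ n) ^ 2) x
  <= Kf n * b ^ 2 * IB (loB a b) (hiB a b) (S m - n) n (Sfrom n) x.
Proof.
  induction n; intros Hn.
  - intros a b x Ha Hb. simpl.
    replace (phi x - phi x / 1) with 0 by field. lra.
  - assert (IH := IHn ltac:(lia)). set (K := Kf n) in *. assert (HK : 0 < K) by apply Kf_pos.
    intros a b x Ha Hb. simpl Kf. fold K.
    set (j := (m - n)%nat).
    change (S m - S n)%nat with (m - n)%nat. fold j.
    assert (Hj1 : (1 <= j)%nat) by (unfold j; lia).
    assert (Hjm : (j <= m)%nat) by (unfold j; lia).
    assert (ESj : (S m - n)%nat = S j) by (unfold j; lia).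
    rewrite ESj in IH.
    set (lo := loB a b). set (hi := hiB a b).
    assert (Hlh : forall i, lo i <= hi i) by (apply lohiB; auto).
    assert (El : lo j = - b) by (unfold lo, loB; destruct (Nat.eq_dec j 0); [lia|auto]).
    assert (Eh : hi j = b) by (unfold hi, hiB; destruct (Nat.eq_dec j 0); [lia|auto]).
    assert (Cphi := phi_Cont).
    assert (CDj : Cont m (fun y => D j y ^ 2)) by (apply Cont_sq; apply D_Cont; auto).
    assert (CSn : Cont m (Sfrom n)) by (apply Sfrom_Cont; lia).
    assert (CIBS : Cont m (IB lo hi (S j) n (Sfrom n))) by (apply (IB_Cont m); auto; unfold j; lia).
    set (E := fun y => 2 * b * Rint (fun r => D j (upd y j r) ^ 2) (- b) b).
    set (R0 := fun z => K * b ^ 2 * IB lo hi (S j) n (Sfrom n) (upd x j z)).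
    assert (CE : Cont m E) by (apply Cont_scal; apply (Cont_param m (fun y => D j y ^ 2)); auto; lra).
    assert (ST := step m lo hi Hlh phi E R0 j n x (- b) b ((2 * b) ^ n) Cphi CE
      ltac:(unfold j; lia) ltac:(lra) ltac:(lra) ltac:(lra) ltac:(apply pow_lt; lra)).
    assert (CR0 : forall r, continuity_pt R0 r).
    { intros r. unfold R0. apply cpt_scal. apply (Cont_slice m); auto. }
    specialize (ST CR0).
    assert (H1 : forall y s z, lo j <= s <= hi j -> - b <= z <= b ->
        (phi (upd y j s) - phi (upd y j z)) ^ 2 <= E y).
    { intros y s z Hs Hz. unfold E. rewrite (Cont_Rint m (fun y => D j y ^ 2)) by auto.
      apply (pw_unw (fun r => phi (upd y j r)) (fun r => D j (upd y j r))).
      - apply phi_der; auto.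
      - intros r. apply (Cont_slice m); auto. apply D_Cont; auto.
      - lra.
      - lra. }
    specialize (ST H1).
    assert (H2 : forall z, - b <= z <= b ->
       IB lo hi (S j) n (fun y => (phi y - IB lo hi (S j) n phi (upd x j z) / (2 * b) ^ n) ^ 2) (upd x j z) <= R0 z).
    { intros z Hz. unfold R0, lo, hi. apply IH; auto. }
    specialize (ST H2).
    unfold lo, hi in ST. rewrite (meanK a b j n x Ha Hb Hj1 ltac:(unfold j; lia)) in ST. fold lo hi in ST.
    eapply Rle_trans. exact ST.
    rewrite El, Eh.
    assert (IE : IB lo hi (S j) n E x = 2 * b * IB lo hi j (S n) (fun y => D j y ^ 2) x).
    { unfold E. rewrite (IB_scal m lo hi Hlh); auto; [| unfold j; lia | apply (Cont_param m (fun y => D j y ^ 2)); auto; lra].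
      f_equal. rewrite IB_peel. rewrite El, Eh.
      rewrite (IB_fubini m lo hi Hlh j n (fun y => D j y ^ 2) x (- b) b); [reflexivity | unfold j; lia | auto | lra]. }
    assert (IR : RInt R0 (- b) b = K * b ^ 2 * IB lo hi j (S n) (Sfrom n) x).
    { unfold R0. rewrite R_scal by (apply (Cont_exRInt m); auto). f_equal.
      rewrite IB_peel, El, Eh. rewrite Rint_RInt; auto. apply (Cont_exRInt m); auto. }
    rewrite IE, IR.
    assert (ES : IB lo hi j (S n) (Sfrom (S n)) x = IB lo hi j (S n) (fun y => D j y ^ 2) x + IB lo hi j (S n) (Sfrom n) x).
    { simpl Sfrom. fold j. apply (IB_plus m lo hi Hlh); auto. unfold j; lia. }
    rewrite ES.
    assert (A0 : 0 <= IB lo hi j (S n) (fun y => D j y ^ 2) x).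
    { apply (IB_nonneg m lo hi Hlh); auto. unfold j; lia. intros; apply pow2_ge_0. }
    assert (B0 : 0 <= IB lo hi j (S n) (Sfrom n) x).
    { apply (IB_nonneg m lo hi Hlh); auto. unfold j; lia. intros; apply Sfrom_nonneg. }
    set (A := IB lo hi j (S n) (fun y => D j y ^ 2) x) in *.
    set (B := IB lo hi j (S n) (Sfrom n) x) in *.
    assert (0 <= b ^ 2) by apply pow2_ge_0.
    replace (2 * (b - - b) * (2 * b * A) + 2 * (b - - b) / (b - - b) * (K * b ^ 2 * B))
      with (8 * b ^ 2 * A + 2 * K * b ^ 2 * B) by (field; lra).
    assert (0 <= 2 * K * b ^ 2 * A) by (repeat apply Rmult_le_pos; lra).
    assert (0 <= 8 * b ^ 2 * B) by (repeat apply Rmult_le_pos; lra).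
    nra.
Qed.

End PHI.


Section VM.
Variable m : nat.
Variables lo hi : nat -> R.
Hypothesis Hlh : forall i, lo i <= hi i.

Lemma IB_sqdiff j n F c x : (j + n <= S m)%nat -> Cont m F ->
  IB lo hi j n (fun y => (F y - c) ^ 2) x =
  IB lo hi j n (fun y => F y ^ 2) x + (-2 * c) * IB lo hi j n F x + c ^ 2 * PL lo hi j n.
Proof.
  intros Hn HF.
  rewrite (IB_ext_fix lo hi j n _ (fun y => (F y ^ 2 + (-2 * c) * F y) + c ^ 2)) by (intros; ring).
  rewrite (IB_plus m lo hi Hlh); auto.
  - rewrite (IB_plus m lo hi Hlh); auto.
    + rewrite (IB_scal m lo hi Hlh); auto. rewrite IB_const. ring.
    + apply Cont_sq; auto.
    + apply Cont_scal; auto.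
  - apply Cont_plus. apply Cont_sq; auto. apply Cont_scal; auto.
  - apply Cont_const.
Qed.

Lemma IB_varmin j n F c x : (j + n <= S m)%nat -> Cont m F -> 0 < PL lo hi j n ->
  IB lo hi j n (fun y => (F y - IB lo hi j n F x / PL lo hi j n) ^ 2) x <= IB lo hi j n (fun y => (F y - c) ^ 2) x.
Proof.
  intros Hn HF HP. rewrite !IB_sqdiff by auto.
  set (P := PL lo hi j n) in *. set (I := IB lo hi j n F x).
  set (C0 := I / P).
  assert (I = C0 * P) by (unfold C0; field; lra).
  rewrite H. assert (0 <= (C0 - c) ^ 2 * P) by (apply Rmult_le_pos; [apply pow2_ge_0|lra]).
  replace (-2 * c * (C0 * P) + c ^ 2 * P) with (-2 * C0 * (C0 * P) + C0 ^ 2 * P + (C0 - c) ^ 2 * P) by ring.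
  lra.
Qed.

End VM.

Lemma PL_box a b n : PL (loB a b) (hiB a b) 0 (S n) = 2 * a * (2 * b) ^ n.
Proof.
  induction n. - simpl. unfold loB, hiB. simpl. ring.
  - change (PL (loB a b) (hiB a b) 0 (S (S n))) with (PL (loB a b) (hiB a b) 0 (S n) * (hiB a b (S n) - loB a b (S n))).
    rewrite IHn. unfold loB, hiB. destruct (Nat.eq_dec (S n) 0); [lia|]. simpl. ring.
Qed.

Section MAIN.
Variable m : nat.
Variable phi : (nat -> R) -> R.
Variable D : nat -> (nat -> R) -> R.
Hypothesis HC : C1c m phi D.
Variables d1 d1' d2 d2' : R.
Hypothesis Hd1 : 0 <= d1 < 1/2.
Hypothesis Hd1' : 0 <= d1'.
Hypothesis Hd2 : 0 <= d2.
Hypothesis Hd2' : 0 <= d2'.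

Let q := 1 - 2 * d1.
Let W1 := wt (2 * d1) (2 * d1').
Let W2 := wt (2 * d2) (2 * d2').

Lemma main_bound a b x : 0 < a -> 0 < b ->
  IB (loB a b) (hiB a b) 0 (S m)
     (fun y => (phi y - IB (loB a b) (hiB a b) 0 (S m) phi x / (2 * a * (2 * b) ^ m)) ^ 2) x
  <= 16 * a * (Rpower a q / q + a) * IB (loB a b) (hiB a b) 0 (S m) (fun y => W1 (y 0%nat) * D 0%nat y ^ 2) x
   + 8 * Kf m * b ^ 2 / Rpower (Rmin (a / 2) (1 / 2)) (2 * d2)
       * IB (loB a b) (hiB a b) 0 (S m) (fun y => W2 (y 0%nat) * Sfrom m D m y) x.
Proof.
  intros Ha Hb.
  set (lo := loB a b). set (hi := hiB a b).
  assert (Hlh : forall i, lo i <= hi i) by (apply lohiB; auto).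
  assert (El : lo 0%nat = - a) by reflexivity.
  assert (Eh : hi 0%nat = a) by reflexivity.
  assert (Cphi := phi_Cont m phi D HC).
  assert (CD0 : Cont m (D 0%nat)) by (apply (D_Cont m phi D HC); lia).
  assert (CW1 : Cont m (fun y => W1 (y 0%nat))).
  { apply (Cont_comp m W1 (fun y => y 0%nat)). apply Cont_coord; lia. intros; apply wt_cont; lra. }
  assert (CW2 : Cont m (fun y => W2 (y 0%nat))).
  { apply (Cont_comp m W2 (fun y => y 0%nat)). apply Cont_coord; lia. intros; apply wt_cont; lra. }
  set (F0 := fun y => W1 (y 0%nat) * D 0%nat y ^ 2).
  assert (CF0 : Cont m F0) by (apply Cont_mult; auto; apply Cont_sq; auto).
  set (Sm := Sfrom m D m).
  assert (CSm : Cont m Sm) by (apply (Sfrom_Cont m phi D HC); lia).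
  set (F2 := fun y => W2 (y 0%nat) * Sm y).
  assert (CF2 : Cont m F2) by (apply Cont_mult; auto).
  assert (Hq : 0 < q) by (unfold q; lra).
  set (Wa := Rpower a q / q + a).
  assert (HWa : 0 < Wa) by (unfold Wa; assert (0 < Rpower a q) by (unfold Rpower; apply exp_pos);
     assert (0 < Rpower a q / q) by (apply Rdiv_lt_0_compat; lra); lra).
  set (wmin := Rpower (Rmin (a / 2) (1 / 2)) (2 * d2)).
  assert (Hwmin : 0 < wmin) by (unfold wmin, Rpower; apply exp_pos).
  set (E := fun y => 4 * Wa * Rint (fun r => F0 (upd y 0%nat r)) (- a) a).
  assert (CE : Cont m E) by (apply Cont_scal; apply Cont_param; [auto|lia|lra]).
  set (R0 := fun z => Kf m * b ^ 2 * IB lo hi 1 m Sm (upd x 0%nat z)).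
  assert (CIBS : Cont m (IB lo hi 1 m Sm)) by (apply (IB_Cont m); auto).
  assert (CR0 : forall r, continuity_pt R0 r).
  { intros r. unfold R0. apply cpt_scal. apply (Cont_slice m); auto. lia. }
  assert (ST := step m lo hi Hlh phi E R0 0 m x (a / 2) a ((2 * b) ^ m) Cphi CE
      ltac:(lia) ltac:(rewrite El; lra) ltac:(lra) ltac:(rewrite Eh; lra) ltac:(apply pow_lt; lra) CR0).
  assert (H1 : forall y s z, lo 0%nat <= s <= hi 0%nat -> a / 2 <= z <= a ->
      (phi (upd y 0%nat s) - phi (upd y 0%nat z)) ^ 2 <= E y).
  { intros y s z Hs Hz. rewrite El, Eh in Hs. unfold E.
    rewrite (Cont_Rint m F0) by (auto; lia).
    rewrite (RInt_ext (V:=R_CompleteNormedModule) (fun r => F0 (upd y 0%nat r)) (fun r => W1 r * D 0%nat (upd y 0%nat r) ^ 2)).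
    2:{ intros. unfold F0. rewrite upd_eq. reflexivity. }
    apply (W_point d1 d1' Hd1 Hd1' (fun r => phi (upd y 0%nat r)) (fun r => D 0%nat (upd y 0%nat r))); auto; try lra.
    - apply (phi_der m phi D HC); lia.
    - intros r. apply (Cont_slice m); auto. lia. }
  specialize (ST H1).
  assert (H2 : forall z, a / 2 <= z <= a ->
     IB lo hi 1 m (fun y => (phi y - IB lo hi 1 m phi (upd x 0%nat z) / (2 * b) ^ m) ^ 2) (upd x 0%nat z) <= R0 z).
  { intros z Hz. unfold R0. assert (P := poincE m phi D HC m (le_n m) a b (upd x 0%nat z) Ha Hb).
    replace (S m - m)%nat with 1%nat in P by lia. exact P. }
  specialize (ST H2).
  assert (VM := IB_varmin m lo hi Hlh 0 (S m) phi
      (/ (a - a / 2) * RInt (fun z => IB lo hi 1 m phi (upd x 0%nat z) / (2 * b) ^ m) (a / 2) a) x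
      ltac:(lia) Cphi ltac:(unfold lo, hi; rewrite PL_box; apply Rmult_lt_0_compat; [lra| apply pow_lt; lra])).
  unfold lo, hi in VM. rewrite PL_box in VM. fold lo hi in VM.
  eapply Rle_trans. exact VM. eapply Rle_trans. exact ST.
  rewrite El, Eh.
  assert (IE : IB lo hi 1 m E x = 4 * Wa * IB lo hi 0 (S m) F0 x).
  { unfold E. rewrite (IB_scal m lo hi Hlh); auto; [| apply Cont_param; [auto|lia|lra]].
    f_equal. rewrite IB_peel. rewrite El, Eh.
    rewrite (IB_fubini m lo hi Hlh 0 m F0 x (- a) a); [reflexivity | lia | auto | lra]. }
  assert (CIB2 : Cont m (IB lo hi 1 m F2)) by (apply (IB_Cont m); auto).
  assert (NIB2 : forall z, 0 <= IB lo hi 1 m F2 (upd x 0%nat z)).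
  { intros z. apply (IB_nonneg m lo hi Hlh); auto. intros y. unfold F2. apply Rmult_le_pos.
    apply wt_nonneg. apply Sfrom_nonneg. }
  assert (IR : RInt R0 (a / 2) a <= Kf m * b ^ 2 / wmin * IB lo hi 0 (S m) F2 x).
  { unfold R0. rewrite R_scal by (apply (Cont_exRInt m); auto; lia).
    replace (Kf m * b ^ 2 / wmin * IB lo hi 0 (S m) F2 x) with (Kf m * b ^ 2 * (/ wmin * IB lo hi 0 (S m) F2 x)) by (unfold Rdiv; ring).
    apply Rmult_le_compat_l.
    { apply Rmult_le_pos. left; apply Kf_pos. apply pow2_ge_0. }
    apply Rle_trans with (RInt (fun z => / wmin * IB lo hi 1 m F2 (upd x 0%nat z)) (a / 2) a).
    - apply RInt_le; try lra.
      + apply (Cont_exRInt m); auto; lia.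
      + apply exR_scal. apply (Cont_exRInt m); auto; lia.
      + intros z Hz.
        assert (EQ : IB lo hi 1 m F2 (upd x 0%nat z) = W2 z * IB lo hi 1 m Sm (upd x 0%nat z)).
        { rewrite (IB_ext_fix lo hi 1 m F2 (fun y => W2 z * Sm y)).
          - apply (IB_scal m lo hi Hlh); auto.
          - intros y Hy. unfold F2. rewrite (Hy 0%nat) by lia. rewrite upd_eq. reflexivity. }
        rewrite EQ.
        assert (WL : wmin <= W2 z) by (unfold wmin, W2; apply wt_lower; lra).
        assert (N : 0 <= IB lo hi 1 m Sm (upd x 0%nat z)).
        { apply (IB_nonneg m lo hi Hlh); auto. intros; apply Sfrom_nonneg. }
        set (J := IB lo hi 1 m Sm (upd x 0%nat z)) in *.
        replace (/ wmin * (W2 z * J)) with ((W2 z / wmin) * J) by (field; lra).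
        assert (1 <= W2 z / wmin).
        { apply (Rmult_le_reg_r wmin); auto. unfold Rdiv. rewrite Rmult_assoc, Rinv_l; lra. }
        nra.
    - rewrite R_scal by (apply (Cont_exRInt m); auto; lia).
      apply Rmult_le_compat_l. left; apply Rinv_0_lt_compat; auto.
      rewrite IB_peel, El, Eh. rewrite Rint_RInt by (apply (Cont_exRInt m); auto; lia).
      apply RInt_sub; try lra.
      + intros. apply (Cont_slice m); auto. lia.
      + intros. auto. }
  rewrite IE.
  replace (2 * (a - - a) / (a - a / 2)) with 8 by (field; lra).
  unfold wmin, Wa in *.
  apply Rplus_le_compat.
  - right. ring.
  - apply Rle_trans with (8 * (Kf m * b ^ 2 / Rpower (Rmin (a / 2) (1 / 2)) (2 * d2) * IB lo hi 0 (S m) F2 x)).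
    + apply Rmult_le_compat_l; [lra|exact IR].
    + right. unfold Rdiv. ring.
Qed.

End MAIN.


Lemma rp_pos x y : 0 < Rpower x y.
Proof. unfold Rpower. apply exp_pos. Qed.

Lemma rp_2 t : 0 < t -> Rpower t 2 = t ^ 2.
Proof. intros. rewrite <- Rpower_pow by auto. replace (INR 2) with 2 by (simpl; lra). reflexivity. Qed.

Lemma rp_one y : Rpower 1 y = 1.
Proof. unfold Rpower. rewrite ln_1, Rmult_0_r. apply exp_0. Qed.

Lemma exp_le_mono x y : x <= y -> exp x <= exp y.
Proof. intros [H|H]. left; apply exp_increasing; auto. subst; lra. Qed.

Lemma rp_le_base a q : 0 < a <= 1 -> q <= 1 -> a <= Rpower a q.
Proof.
  intros Ha Hq. rewrite <- (Rpower_1 a) at 1 by lra. unfold Rpower. apply exp_le_mono.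
  assert (ln a <= 0) by (rewrite <- ln_1; apply ln_le; lra). nra.
Qed.

Lemma rp_ge_base a q : 1 <= a -> q <= 1 -> Rpower a q <= a.
Proof.
  intros Ha Hq. rewrite <- (Rpower_1 a) at 2 by lra. unfold Rpower. apply exp_le_mono.
  assert (0 <= ln a) by (rewrite <- ln_1; apply ln_le; lra). nra.
Qed.

Lemma rp_ge1 a q : 1 <= a -> 0 <= q -> 1 <= Rpower a q.
Proof.
  intros Ha Hq. rewrite <- (rp_one q). apply Rle_Rpower_l; lra.
Qed.

Lemma rp_le1 a q : 0 < a <= 1 -> 0 <= q -> Rpower a q <= 1.
Proof. intros Ha Hq. rewrite <- (rp_one q). apply Rle_Rpower_l; lra. Qed.

Lemma bpow_le1 t p p' : 0 < t <= 1 -> bpow t p p' = Rpower t p.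
Proof. intros. unfold bpow, pw. destruct Rle_dec; [|lra]. destruct Req_EM_T; [lra|auto]. Qed.
Lemma bpow_gt1 t p p' : 1 < t -> bpow t p p' = Rpower t p'.
Proof. intros. unfold bpow, pw. destruct Rle_dec; [lra|]. destruct Req_EM_T; [lra|auto]. Qed.

Section CONST.
Variables d1 d1' d2 d2' T : R.
Hypothesis Hd1 : 0 <= d1 < 1/2.
Hypothesis Hd1' : 1/2 <= d1' < 1.
Hypothesis Hd2 : 0 <= d2.
Hypothesis Hd2' : 0 <= d2'.
Hypothesis HT : 0 < T.

Let q := 1 - 2 * d1.
Definition CA := 16 * (1 / (1 - 2 * d1) + 1) * (1 + Rpower T (alpha d1') ^ 2).
Definition CB := (1 + Rpower T (betaexp d1' d2') ^ 2) / Rpower (1/2) (2 * d2).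

Lemma alpha_pos d : d < 1 -> 0 < alpha d.
Proof. intros. unfold alpha. apply Rinv_0_lt_compat. lra. Qed.

Lemma radA_pos t : 0 < t -> 0 < radA d1 d1' t.
Proof. intros. unfold radA, bpow, pw. destruct Rle_dec; destruct Req_EM_T; try lra; apply rp_pos. Qed.
Lemma radB_pos t : 0 < t -> 0 < radB d1 d1' d2 d2' t.
Proof. intros. unfold radB, bpow, pw. destruct Rle_dec; destruct Req_EM_T; try lra; apply rp_pos. Qed.

Lemma constA t : 0 < t <= T ->
  16 * radA d1 d1' t * (Rpower (radA d1 d1' t) q / q + radA d1 d1' t) <= CA * t ^ 2.
Proof.
  intros Ht. set (a := radA d1 d1' t). assert (Ha := radA_pos t ltac:(lra)). fold a in Ha.
  assert (Hq : 0 < q) by (unfold q; lra).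
  assert (Hq1 : q <= 1) by (unfold q; lra).
  unfold CA. fold q. replace (1 / q) with (/ q) by (field; lra).
  assert (0 < Rpower T (alpha d1') ^ 2) by (apply pow_lt; apply rp_pos).
  assert (Hiq : 0 < / q) by (apply Rinv_0_lt_compat; lra).
  destruct (Rle_dec t 1) as [H1|H1].
  - assert (Ea : a = Rpower t (alpha d1)) by (unfold a, radA; apply bpow_le1; lra).
    assert (Hal := alpha_pos d1 ltac:(lra)).
    assert (a1 : a <= 1) by (rewrite Ea; apply rp_le1; lra).
    assert (E2 : a * Rpower a q = t ^ 2).
    { rewrite <- (Rpower_1 a) at 1 by lra. rewrite <- Rpower_plus. rewrite Ea, Rpower_mult.
      replace (alpha d1 * (1 + q)) with 2. apply rp_2; lra.
      unfold alpha, q. field. lra. }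
    assert (a * a <= a * Rpower a q) by (apply Rmult_le_compat_l; [lra|apply rp_le_base; lra]).
    assert (16 * a * (Rpower a q / q + a) = 16 * (/ q * (a * Rpower a q) + a * a)) by (field; lra).
    rewrite H2, E2.
    assert (0 <= t ^ 2) by apply pow2_ge_0.
    assert (16 * (/ q * t ^ 2 + a * a) <= 16 * (/ q + 1) * t ^ 2) by nra.
    assert (16 * (/ q + 1) * t ^ 2 <= 16 * (/ q + 1) * (1 + Rpower T (alpha d1') ^ 2) * t ^ 2) by nra.
    lra.
  - assert (Ea : a = Rpower t (alpha d1')) by (unfold a, radA; apply bpow_gt1; lra).
    assert (Hal := alpha_pos d1' ltac:(lra)).
    assert (a1 : 1 <= a) by (rewrite Ea; apply rp_ge1; lra).
    assert (aA : a <= Rpower T (alpha d1')) by (rewrite Ea; apply Rle_Rpower_l; lra).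
    assert (Rpower a q <= a) by (apply rp_ge_base; lra).
    assert (16 * a * (Rpower a q / q + a) <= 16 * (/ q + 1) * (a * a)).
    { assert (Rpower a q / q <= a / q) by (unfold Rdiv; apply Rmult_le_compat_r; lra). nra. }
    assert (a * a <= Rpower T (alpha d1') ^ 2) by nra.
    assert (1 <= t ^ 2) by nra.
    assert (0 < 16 * (/ q + 1)) by lra.
    assert (16 * (/ q + 1) * (a * a) <= 16 * (/ q + 1) * (1 + Rpower T (alpha d1') ^ 2)) by nra.
    set (X := 16 * (/ q + 1) * (1 + Rpower T (alpha d1') ^ 2)) in *.
    assert (0 < X) by (unfold X; apply Rmult_lt_0_compat; lra).
    assert (X <= X * t ^ 2) by (rewrite <- (Rmult_1_r X) at 1; apply Rmult_le_compat_l; lra).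
    lra.
Qed.

Lemma constB t : 0 < t <= T ->
  radB d1 d1' d2 d2' t ^ 2 / Rpower (Rmin (radA d1 d1' t / 2) (1 / 2)) (2 * d2) <= CB * t ^ 2.
Proof.
  intros Ht. set (a := radA d1 d1' t). set (b := radB d1 d1' d2 d2' t).
  assert (Ha := radA_pos t ltac:(lra)). assert (Hb := radB_pos t ltac:(lra)). fold a b in Ha, Hb.
  assert (Hh : 0 < Rpower (1/2) (2 * d2)) by apply rp_pos.
  unfold CB.
  destruct (Rle_dec t 1) as [H1|H1].
  - assert (Ea : a = Rpower t (alpha d1)) by (unfold a, radA; apply bpow_le1; lra).
    assert (Eb : b = Rpower t (betaexp d1 d2)) by (unfold b, radB; apply bpow_le1; lra).
    assert (Hal := alpha_pos d1 ltac:(lra)).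
    assert (a1 : a <= 1) by (rewrite Ea; apply rp_le1; lra).
    rewrite Rmin_left by lra.
    replace (a / 2) with (a * (1/2)) by field.
    rewrite <- Rpower_mult_distr by lra.
    assert (Eb2 : b ^ 2 = Rpower t (alpha d1 * (2 * d2)) * Rpower t 2).
    { rewrite Eb. rewrite <- Rpower_plus.
      replace (alpha d1 * (2 * d2) + 2) with (betaexp d1 d2 + betaexp d1 d2).
      - rewrite Rpower_plus. simpl. ring.
      - unfold betaexp, alpha. field. lra. }
    assert (Eaa : Rpower a (2 * d2) = Rpower t (alpha d1 * (2 * d2))) by (rewrite Ea; apply Rpower_mult).
    rewrite Eb2, Eaa, rp_2 by lra.
    assert (P1 : 0 < Rpower t (alpha d1 * (2 * d2))) by apply rp_pos.
    replace (Rpower t (alpha d1 * (2 * d2)) * t ^ 2 / (Rpower t (alpha d1 * (2 * d2)) * Rpower (1 / 2) (2 * d2)))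
      with (t ^ 2 / Rpower (1 / 2) (2 * d2)) by (field; lra).
    unfold Rdiv. assert (0 <= t ^ 2) by apply pow2_ge_0.
    assert (0 <= Rpower T (betaexp d1' d2') ^ 2) by apply pow2_ge_0.
    assert (0 < / Rpower (1 / 2) (2 * d2)) by (apply Rinv_0_lt_compat; auto).
    assert (0 <= Rpower T (betaexp d1' d2') ^ 2 * / Rpower (1 / 2) (2 * d2) * t ^ 2) by (apply Rmult_le_pos; [apply Rmult_le_pos|]; lra).
    lra.
  - assert (Ea : a = Rpower t (alpha d1')) by (unfold a, radA; apply bpow_gt1; lra).
    assert (Eb : b = Rpower t (betaexp d1' d2')) by (unfold b, radB; apply bpow_gt1; lra).
    assert (Hal := alpha_pos d1' ltac:(lra)).
    assert (Hbe : 0 <= betaexp d1' d2') by (unfold betaexp; apply Rmult_le_pos; lra).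
    assert (a1 : 1 <= a) by (rewrite Ea; apply rp_ge1; lra).
    rewrite Rmin_right by lra.
    assert (bB : b <= Rpower T (betaexp d1' d2')) by (rewrite Eb; apply Rle_Rpower_l; lra).
    assert (b ^ 2 <= Rpower T (betaexp d1' d2') ^ 2) by (apply pow_incr; lra).
    assert (1 <= t ^ 2) by nra.
    change (b ^ 2 * / Rpower (1 / 2) (2 * d2) <= (1 + Rpower T (betaexp d1' d2') ^ 2) * / Rpower (1 / 2) (2 * d2) * t ^ 2).
    assert (0 < / Rpower (1 / 2) (2 * d2)) by (apply Rinv_0_lt_compat; auto).
    assert (0 <= Rpower T (betaexp d1' d2') ^ 2) by apply pow2_ge_0.
    set (B2 := Rpower T (betaexp d1' d2') ^ 2) in *. set (ih := / Rpower (1 / 2) (2 * d2)) in *.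
    assert (b ^ 2 * ih <= B2 * ih) by (apply Rmult_le_compat_r; lra).
    assert (B2 * ih <= (1 + B2) * ih * t ^ 2).
    { assert (0 <= ih * (t ^ 2 - 1) + B2 * ih * (t ^ 2 - 1)) by (apply Rplus_le_le_0_compat; [apply Rmult_le_pos| apply Rmult_le_pos; [apply Rmult_le_pos|]]; lra). nra. }
    lra.
Qed.

End CONST.


Theorem proposition5p2 (m : nat) (d1 d1' d2 d2' : R) :
  (1 <= m)%nat ->
  0 <= d1 < 1 / 2 -> 1 / 2 <= d1' < 1 -> 0 <= d2 -> 0 <= d2' ->
  forall T : R, 0 < T ->
  exists lam : R, 0 < lam /\
    forall (phi : (nat -> R) -> R) (D : nat -> (nat -> R) -> R),
      C1c m phi D ->
      forall t : R, 0 < t <= T ->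
        IntC m d1 d1' d2 d2' t (Gamma m d1 d1' d2 d2' D) >=
        lam * / t ^ 2 *
        IntC m d1 d1' d2 d2' t
          (fun x => (phi x - IntC m d1 d1' d2 d2' t phi
                             / volC m d1 d1' d2 d2' t) ^ 2).
Proof.
  intros Hm Hd1 Hd1' Hd2 Hd2' T HT.
  assert (HCA : 0 < CA d1 d1' T).
  { unfold CA. assert (0 < 1 / (1 - 2 * d1)) by (apply Rdiv_lt_0_compat; lra).
    assert (0 <= Rpower T (alpha d1') ^ 2) by apply pow2_ge_0.
    apply Rmult_lt_0_compat; [|lra]. lra. }
  assert (HCB : 0 < CB d1' d2 d2' T).
  { unfold CB. apply Rdiv_lt_0_compat. assert (0 <= Rpower T (betaexp d1' d2') ^ 2) by apply pow2_ge_0. lra. apply rp_pos. }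
  assert (HK := Kf_pos m).
  set (Cm := CA d1 d1' T + 8 * Kf m * CB d1' d2 d2' T).
  assert (HCm : 0 < Cm) by (unfold Cm; assert (0 < 8 * Kf m * CB d1' d2 d2' T) by (apply Rmult_lt_0_compat; [apply Rmult_lt_0_compat; lra | exact HCB]); lra).
  exists (/ Cm). split. apply Rinv_0_lt_compat; auto.
  intros phi D HC t Ht.
  assert (Ha : 0 < radA d1 d1' t) by (eapply radA_pos; eauto; lra).
  assert (Hb : 0 < radB d1 d1' d2 d2' t) by (eapply radB_pos; eauto; lra).
  set (a := radA d1 d1' t) in *. set (b := radB d1 d1' d2 d2' t) in *.
  unfold IntC, volC. fold a b.
  rewrite !IntBox_IB.
  change (fun i : nat => if Nat.eq_dec i 0 then - a else - b) with (loB a b).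
  change (fun i : nat => if Nat.eq_dec i 0 then a else b) with (hiB a b).
  set (x0 := fun _ : nat => 0).
  assert (MB := main_bound m phi D HC d1 d1' d2 d2' Hd1 ltac:(lra) Hd2 Hd2' a b x0 Ha Hb).
  assert (CA1 : 16 * a * (Rpower a (1 - 2 * d1) / (1 - 2 * d1) + a) <= CA d1 d1' T * t ^ 2) by (unfold a; eapply constA; eauto).
  assert (CB1 : b ^ 2 / Rpower (Rmin (a / 2) (1 / 2)) (2 * d2) <= CB d1' d2 d2' T * t ^ 2).
  { unfold a, b. eapply constB; eauto. }
  set (lo := loB a b) in *. set (hi := hiB a b) in *.
  assert (Hlh : forall i, lo i <= hi i) by (apply lohiB; auto).
  set (W1 := wt (2 * d1) (2 * d1')) in *. set (W2 := wt (2 * d2) (2 * d2')) in *.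
  set (I1 := IB lo hi 0 (S m) (fun y => W1 (y 0%nat) * D 0%nat y ^ 2) x0) in *.
  set (I2 := IB lo hi 0 (S m) (fun y => W2 (y 0%nat) * Sfrom m D m y) x0) in *.
  assert (CD0 : Cont m (D 0%nat)) by (apply (D_Cont m phi D HC); lia).
  assert (CW1 : Cont m (fun y => W1 (y 0%nat))).
  { apply (Cont_comp m W1 (fun y => y 0%nat)). apply Cont_coord; lia. intros; apply wt_cont; lra. }
  assert (CW2 : Cont m (fun y => W2 (y 0%nat))).
  { apply (Cont_comp m W2 (fun y => y 0%nat)). apply Cont_coord; lia. intros; apply wt_cont; lra. }
  assert (CSm : Cont m (Sfrom m D m)) by (apply (Sfrom_Cont m phi D HC); lia).
  assert (CF0 : Cont m (fun y => W1 (y 0%nat) * D 0%nat y ^ 2)) by (apply Cont_mult; auto; apply Cont_sq; auto).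
  assert (CF2 : Cont m (fun y => W2 (y 0%nat) * Sfrom m D m y)) by (apply Cont_mult; auto).
  assert (I1p : 0 <= I1).
  { apply (IB_nonneg m lo hi Hlh); auto. intros y. apply Rmult_le_pos. apply wt_nonneg. apply pow2_ge_0. }
  assert (I2p : 0 <= I2).
  { apply (IB_nonneg m lo hi Hlh); auto. intros y. apply Rmult_le_pos. apply wt_nonneg. apply Sfrom_nonneg. }
  assert (EG : IB lo hi 0 (S m) (Gamma m d1 d1' d2 d2' D) x0 = I1 + I2).
  { unfold I1, I2. rewrite <- (IB_plus m lo hi Hlh); auto.
    apply IB_ext_fix. intros y _. unfold Gamma. rewrite Sfrom_sum1. reflexivity. }
  rewrite EG.
  set (Var := IB lo hi 0 (S m) (fun y => (phi y - IB lo hi 0 (S m) phi x0 / (2 * a * (2 * b) ^ m)) ^ 2) x0) in *.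
  set (q := 1 - 2 * d1) in *.
  set (wmin := Rpower (Rmin (a / 2) (1 / 2)) (2 * d2)) in *.
  assert (Var <= Cm * t ^ 2 * (I1 + I2)).
  { eapply Rle_trans. exact MB.
    assert (16 * a * (Rpower a q / q + a) * I1 <= CA d1 d1' T * t ^ 2 * I1) by (apply Rmult_le_compat_r; auto).
    assert (8 * Kf m * b ^ 2 / wmin * I2 <= 8 * Kf m * (CB d1' d2 d2' T * t ^ 2) * I2).
    { apply Rmult_le_compat_r; auto. unfold Rdiv. rewrite Rmult_assoc. apply Rmult_le_compat_l; [lra|]. exact CB1. }
    assert (0 <= t ^ 2) by apply pow2_ge_0.
    assert (0 <= CA d1 d1' T * t ^ 2 * I2) by (apply Rmult_le_pos; [apply Rmult_le_pos|]; lra).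
    assert (0 <= 8 * Kf m * (CB d1' d2 d2' T * t ^ 2) * I1) by (apply Rmult_le_pos; [apply Rmult_le_pos|]; [lra| apply Rmult_le_pos|]; lra).
    unfold Cm. nra. }
  assert (Ht2 : 0 < t ^ 2) by (apply pow_lt; lra).
  apply Rle_ge.
  apply Rle_trans with (/ Cm * / t ^ 2 * (Cm * t ^ 2 * (I1 + I2))).
  - apply Rmult_le_compat_l; auto. apply Rmult_le_pos; left; apply Rinv_0_lt_compat; auto.
  - right. field. split; lra.
Qed.
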